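(* The assignment $(P,J)\mapsto(\mathfrak I(P,J),K_{\mathfrak I(P,J)})$ extends to a 2-functor $\mathfrak I:\mathbf{DocSites}\to\mathbf{GeomDoc}$ which is a strict left 2-adjoint to the inclusion $\mathbf{GeomDoc}\hookrightarrow\mathbf{DocSites}$: on a 1-cell $(F,a)$ it is the unique morphism of geometric doctrines $(F,\mathfrak a)$ with $\mathfrak a\circ\eta^{(P,J)}=\eta^{(Q,K)}\circ a$, and every 2-cell $\alpha:(F,a)\Rightarrow(F',a')$ of $\mathbf{DocSites}$ is also a 2-cell $\alpha:(F,\mathfrak a)\Rightarrow(F',\mathfrak a')$. In particular, for every doctrinal site $(P,J)$ and geometric doctrine $\mathbb L$ there is an isomorphism of categories, natural in both variables, $$\mathrm{Hom}_{\mathbf{DocSites}}((P,J),(\mathbb L,K_{\mathbb L}))\cong\mathrm{Hom}_{\mathbf{GeomDoc}}((\mathfrak I(P,J),K_{\mathfrak I(P,J)}),(\mathbb L,K_{\mathbb L})),$$ given by precomposition with $(\mathrm{id}_{\mathcal C},\eta^{(P,J)})$.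
   Context: A doctrine is a functor $P:\mathcal C^{op}\to\mathbf{PreOrd}$ ($\mathcal C$ a small category). Its Grothendieck construction $\mathcal C\rtimes P$ has objects the pairs $(c,x)$ with $c\in\mathcal C$, $x\in P(c)$, and a morphism $f:(c,x)\to(d,y)$ for each morphism $f:c\to d$ of $\mathcal C$ with $x\le P(f)(y)$. A doctrinal site is a pair $(P,J)$ with $J$ a Grothendieck topology on $\mathcal C\rtimes P$. A functor $F:\mathcal C\to\mathcal D$ is flat if it is a morphism of sites $(\mathcal C,J_{triv})\to(\mathcal D,J_{triv})$ for the trivial topologies. The 2-category $\mathbf{DocSites}$ has doctrinal sites as objects; a 1-cell $(F,a):(P,J)\to(Q,K)$ (with $Q:\mathcal D^{op}\to\mathbf{PreOrd}$) is a flat functor $F:\mathcal C\to\mathcal D$ and a natural transformation $a:P\Rightarrow Q\circ F^{op}$ such that $F\rtimes a:\mathcal C\rtimes P\to\mathcal D\rtimes Q$, $(c,x)\mapsto(F(c),a_c(x))$, $f\mapsto F(f)$, is a morphism of sites $(\mathcal C\rtimes P,J)\to(\mathcal D\rtimes Q,K)$; a 2-cell $(F,a)\Rightarrow(F',a')$ is a natural transformation $\alpha:F\Rightarrow F'$ with $a_c(x)\le Q(\alpha_c)(a'_c(x))$ for all $c$, $x\in P(c)$. $\mathbf{Frm}_{open}$ is the category of frames and frame homomorphisms having a left adjoint satisfying Frobenius reciprocity. For $\mathbb L:\mathcal C^{op}\to\mathbf{Frm}_{open}$ and $f:d\to c$, $\exists_f$ denotes the left adjoint of $\mathbb L(f)$.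 Such $\mathbb L$ is a geometric doctrine if for every $h:e\to d$ in $\mathcal C$ and every sieve $S$ on $(d,V)$ in $\mathcal C\rtimes\mathbb L$ with $V=\bigvee_{(f:(c,U)\to(d,V))\in S}\exists_fU$, one has $\mathbb L(h)(V)=\bigvee\exists_gW$ over all $g:(c,W)\to(e,\mathbb L(h)(V))$ with $h\circ g\in S$. $K_{\mathbb L}$ is the topology on $\mathcal C\rtimes\mathbb L$ in which $\{f_i:(c_i,U_i)\to(d,V)\}_i$ covers iff $V=\bigvee_i\exists_{f_i}U_i$. $\mathbf{GeomDoc}$ is the full 2-subcategory of $\mathbf{DocSites}$ on the $(\mathbb L,K_{\mathbb L})$; its 1-cells are morphisms of geometric doctrines. Geometric completion: $\mathfrak I(P,J)(c)$ is the set, ordered by inclusion, of sets $S$ of pairs $(f,x)$ with $f:d\to c$ in $\mathcal C$, $x\in P(d)$ such that (a) if $(f,x)\in S$, $g:e\to d$, $y\in P(e)$, $y\le P(g)(x)$ then $(f\circ g,y)\in S$; (b) if $f:d\to c$, $x\in P(d)$ and there is a $J$-covering family $\{h_i:(e_i,y_i)\to(d,x)\}$ with $(f\circ h_i,y_i)\in S$ for all $i$, then $(f,x)\in S$; for $f:d\to c$, $\mathfrak I(P,J)(f)(S)=\{(g,y):(f\circ g,y)\in S\}$. The unit $\eta^{(P,J)}_c(x)$ is the smallest element of $\mathfrak I(P,J)(c)$ containing $\{(g,y):g:e\to c,\ y\le P(g)(x)\}$. $\mathfrak I(P,J)$ is a geometric doctrine, and there is a unique morphism of geometric doctrines extending any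 morphism $(P,J)\to(\mathbb L,K_{\mathbb L})$ along $\eta^{(P,J)}$. *)

(* Defs.v *)
From Stdlib Require Import ProofIrrelevance FunctionalExtensionality PropExtensionality.

Record Cat := {
  Ob :> Type;
  Hom : Ob -> Ob -> Type;
  idm : forall a, Hom a a;
  cmp : forall a b c, Hom b c -> Hom a b -> Hom a c;   (* cmp g f = g o f *)
  cmp_idl : forall a b (f : Hom a b), cmp a b b (idm b) f = f;
  cmp_idr : forall a b (f : Hom a b), cmp a a b f (idm a) = f;
  cmp_assoc : forall a b c d (f : Hom c d) (g : Hom b c) (h : Hom a b),
      cmp a c d f (cmp a b c g h) = cmp a b d (cmp b c d f g) h }.
Arguments Hom {_} _ _.
Arguments idm {_} _.
Arguments cmp {_ _ _ _} _ _.

Record Functor (C D : Cat) := {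
  fobj :> C -> D;
  fmap : forall a b : C, Hom a b -> Hom (fobj a) (fobj b);
  fmap_id : forall a, fmap a a (idm a) = idm (fobj a);
  fmap_cmp : forall a b c (f : Hom b c) (g : Hom a b),
      fmap a c (cmp f g) = cmp (fmap b c f) (fmap a b g) }.
Arguments fobj {_ _} _ _.
Arguments fmap {_ _} _ {_ _} _.

Definition idF (C : Cat) : Functor C C.
Proof.
  refine {| fobj := fun c => c; fmap := fun a b f => f |}; reflexivity.
Defined.

Record NatTrans (C D : Cat) (F G : Functor C D) := {
  nt :> forall c : C, Hom (F c) (G c);
  nt_nat : forall (c d : C) (f : Hom c d),
      cmp (nt d) (fmap F f) = cmp (fmap G f) (nt c) }.
Arguments NatTrans {_ _} _ _.
Arguments nt {_ _ _ _} _ _.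

Record PreFunctor (C D : Cat) := {
  pobj : C -> D;
  pmap : forall a b : C, Hom a b -> Hom (pobj a) (pobj b) }.
Arguments pobj {_ _} _ _.
Arguments pmap {_ _} _ {_ _} _.

Definition toPF {C D : Cat} (F : Functor C D) : PreFunctor C D :=
  {| pobj := fobj F; pmap := fun a b f => fmap F f |}.

Definition SieveT {C : Cat} (a : C) := forall b : C, Hom b a -> Prop.

Definition is_sieve {C : Cat} {a : C} (S : SieveT a) : Prop :=
  forall b (f : Hom b a), S b f -> forall e (g : Hom e b), S e (cmp f g).

Definition CoverT (C : Cat) := forall a : C, SieveT a -> Prop.

Definition maxS {C : Cat} (a : C) : SieveT a := fun _ _ => True.

Definition pullS {C : Cat} {a b : C} (S : SieveT a) (h : Hom b a) : SieveT b :=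
  fun e g => S e (cmp h g).

Definition is_topology {C : Cat} (J : CoverT C) : Prop :=
  (forall a S, J a S -> is_sieve S) /\
  (forall a, J a (maxS a)) /\
  (forall a (S : SieveT a) b (h : Hom b a), J a S -> J b (pullS S h)) /\
  (forall a (S R : SieveT a), J a S -> is_sieve R ->
      (forall b (f : Hom b a), S b f -> J b (pullS R f)) -> J a R).

Definition triv (C : Cat) : CoverT C := fun a S => forall b (f : Hom b a), S b f.

Definition gen {C : Cat} {a : C} {I : Type} (dom : I -> C)
  (arr : forall i, Hom (dom i) a) : SieveT a :=
  fun e g => exists i (k : Hom e (dom i)), g = cmp (arr i) k.

Definition covers {C : Cat} (K : CoverT C) (a : C) {I : Type} (dom : I -> C)
  (arr : forall i, Hom (dom i) a) : Prop := K a (gen dom arr).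

(* Morphism of sites (C,J) -> (D,K) (Caramello's four conditions). *)
Definition is_site_morphism {C D : Cat} (J : CoverT C) (K : CoverT D)
  (F : PreFunctor C D) : Prop :=
  (forall (a : C) (S : SieveT a), J a S ->
     covers K (pobj F a)
       (fun i : {b : C & {f : Hom b a | S b f}} => pobj F (projT1 i))
       (fun i => pmap F (proj1_sig (projT2 i)))) /\
  (forall d : D, exists (I : Type) (dom : I -> D) (h : forall i, Hom (dom i) d),
     covers K d dom h /\
     forall i, exists (c : C), inhabited (Hom (dom i) (pobj F c))) /\
  (forall (c1 c2 : C) (d : D) (g1 : Hom d (pobj F c1)) (g2 : Hom d (pobj F c2)),
     exists (I : Type) (dom : I -> D) (h : forall i, Hom (dom i) d),
     covers K d dom h /\
     forall i, exists (c : C) (f1 : Hom c c1) (f2 : Hom c c2)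
                      (k : Hom (dom i) (pobj F c)),
       cmp (pmap F f1) k = cmp g1 (h i) /\ cmp (pmap F f2) k = cmp g2 (h i)) /\
  (forall (c1 c2 : C) (f1 f2 : Hom c1 c2) (d : D) (g : Hom d (pobj F c1)),
     cmp (pmap F f1) g = cmp (pmap F f2) g ->
     exists (I : Type) (dom : I -> D) (h : forall i, Hom (dom i) d),
     covers K d dom h /\
     forall i, exists (c : C) (e : Hom c c1) (k : Hom (dom i) (pobj F c)),
       cmp f1 e = cmp f2 e /\ cmp (pmap F e) k = cmp g (h i)).

Definition is_flat {C D : Cat} (F : Functor C D) : Prop :=
  is_site_morphism (triv C) (triv D) (toPF F).

Record Doctrine (C : Cat) := {
  dob : C -> Type;
  dle : forall c, dob c -> dob c -> Prop;
  dle_refl : forall c x, dle c x x;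
  dle_trans : forall c x y z, dle c x y -> dle c y z -> dle c x z;
  dmap : forall (c d : C), Hom d c -> dob c -> dob d;
  dmap_mono : forall c d (f : Hom d c) x y, dle c x y -> dle d (dmap c d f x) (dmap c d f y);
  dmap_id : forall c x, dmap c c (idm c) x = x;
  dmap_cmp : forall c d e (f : Hom d c) (g : Hom e d) x,
      dmap c e (cmp f g) x = dmap d e g (dmap c d f x) }.
Arguments dob {_} _ _.
Arguments dle {_} _ {_} _ _.
Arguments dmap {_} _ {_ _} _ _.

Definition GOb {C : Cat} (P : Doctrine C) := {c : C & dob P c}.
Definition GHom {C : Cat} (P : Doctrine C) (a b : GOb P) :=
  {f : Hom (projT1 a) (projT1 b) | dle P (projT2 a) (dmap P f (projT2 b))}.

Definition Gid {C : Cat} (P : Doctrine C) (a : GOb P) : GHom P a a.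
Proof.
  exists (idm (projT1 a)). rewrite dmap_id. apply dle_refl.
Defined.

Definition Gcmp {C : Cat} (P : Doctrine C) (a b c : GOb P)
  (g : GHom P b c) (f : GHom P a b) : GHom P a c.
Proof.
  exists (cmp (proj1_sig g) (proj1_sig f)).
  rewrite dmap_cmp. eapply dle_trans; [exact (proj2_sig f)|].
  apply dmap_mono. exact (proj2_sig g).
Defined.

Definition Groth {C : Cat} (P : Doctrine C) : Cat.
Proof.
  refine {| Ob := GOb P; Hom := GHom P; idm := Gid P; cmp := Gcmp P |}.
  - intros a b [f Hf]. unfold Gcmp, Gid. apply subset_eq_compat. apply cmp_idl.
  - intros a b [f Hf]. unfold Gcmp, Gid. apply subset_eq_compat. apply cmp_idr.
  - intros a b c d [f Hf] [g Hg] [h Hh]. unfold Gcmp. apply subset_eq_compat. simpl. apply cmp_assoc.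
Defined.

(* a : P => Q o F^op  is a natural transformation of PreOrd-valued functors *)
Definition nat_mono {C D : Cat} (P : Doctrine C) (Q : Doctrine D) (F : Functor C D)
  (a : forall c, dob P c -> dob Q (F c)) : Prop :=
  (forall c (x y : dob P c), dle P x y -> dle Q (a c x) (a c y)) /\
  (forall (c d : C) (f : Hom d c) (x : dob P c),
      a d (dmap P f x) = dmap Q (fmap F f) (a c x)).

Definition groth_pf {C D : Cat} {P : Doctrine C} {Q : Doctrine D} {F : Functor C D}
  {a : forall c, dob P c -> dob Q (F c)} (H : nat_mono P Q F a) :
  PreFunctor (Groth P) (Groth Q).
Proof.
  refine {| pobj := fun (u : Groth P) => (existT (dob Q) (F (projT1 u)) (a _ (projT2 u)) : Groth Q);
            pmap := fun u v f => _ |}.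
  exists (fmap F (proj1_sig f)). simpl.
  destruct H as [Hm Hn]. rewrite <- Hn. apply Hm. exact (proj2_sig f).
Defined.

Definition is_1cell {C D : Cat} {P : Doctrine C} {Q : Doctrine D}
  (J : CoverT (Groth P)) (K : CoverT (Groth Q)) (F : Functor C D)
  (a : forall c, dob P c -> dob Q (F c)) : Prop :=
  is_flat F /\ exists H : nat_mono P Q F a, is_site_morphism J K (groth_pf H).

Definition is_2cell {C D : Cat} {P : Doctrine C} {Q : Doctrine D} {F F' : Functor C D}
  (a : forall c, dob P c -> dob Q (F c)) (a' : forall c, dob P c -> dob Q (F' c))
  (alpha : NatTrans F F') : Prop :=
  forall c (x : dob P c), dle Q (a c x) (dmap Q (alpha c) (a' c x)).

Record OpenFrameDoc {D : Cat} (L : Doctrine D) := {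
  of_antisym : forall c (x y : dob L c), dle L x y -> dle L y x -> x = y;
  of_join : forall c, (dob L c -> Prop) -> dob L c;
  of_join_ub : forall c (S : dob L c -> Prop) x, S x -> dle L x (of_join c S);
  of_join_lub : forall c (S : dob L c -> Prop) y,
      (forall x, S x -> dle L x y) -> dle L (of_join c S) y;
  of_meet : forall c, dob L c -> dob L c -> dob L c;
  of_meet_l : forall c (x y : dob L c), dle L (of_meet c x y) x;
  of_meet_r : forall c (x y : dob L c), dle L (of_meet c x y) y;
  of_meet_glb : forall c (x y z : dob L c), dle L z x -> dle L z y -> dle L z (of_meet c x y);
  of_top : forall c, dob L c;
  of_top_max : forall c (x : dob L c), dle L x (of_top c);
  of_distr : forall c (x : dob L c) (S : dob L c -> Prop),
      of_meet c x (of_join c S) = of_join c (fun z => exists y, S y /\ z = of_meet c x y);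
  of_map_meet : forall c d (f : Hom d c) (x y : dob L c),
      dmap L f (of_meet c x y) = of_meet d (dmap L f x) (dmap L f y);
  of_map_top : forall c d (f : Hom d c), dmap L f (of_top c) = of_top d;
  of_map_join : forall c d (f : Hom d c) (S : dob L c -> Prop),
      dmap L f (of_join c S) = of_join d (fun z => exists y, S y /\ z = dmap L f y);
  of_ex : forall (c d : D), Hom d c -> dob L d -> dob L c;
  of_ex_adj : forall c d (f : Hom d c) (U : dob L d) (V : dob L c),
      dle L (of_ex c d f U) V <-> dle L U (dmap L f V);
  of_frob : forall c d (f : Hom d c) (U : dob L d) (V : dob L c),
      of_ex c d f (of_meet d U (dmap L f V)) = of_meet c (of_ex c d f U) V }.
Arguments of_join {_ _} _ _ _.
Arguments of_ex {_ _} _ {_ _} _ _.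

Definition KL {D : Cat} {L : Doctrine D} (G : OpenFrameDoc L) : CoverT (Groth L) :=
  fun (a : Groth L) (S : SieveT a) =>
    projT2 a = of_join G (projT1 a)
      (fun Z => exists (b : Groth L) (f : Hom b a),
                  S b f /\ Z = of_ex G (proj1_sig f) (projT2 b)).

Definition hlift {D : Cat} (L : Doctrine D) {d e : D} (h : Hom e d) (V : dob L d) :
  @Hom (Groth L) (existT (dob L) e (dmap L h V)) (existT (dob L) d V) :=
  exist _ h (dle_refl D L e (dmap L h V)).

Definition geometric {D : Cat} {L : Doctrine D} (G : OpenFrameDoc L) : Prop :=
  forall (d e : D) (h : Hom e d) (V : dob L d)
         (S : @SieveT (Groth L) (existT (dob L) d V)),
    is_sieve S -> KL G _ S ->
    KL G (existT (dob L) e (dmap L h V)) (pullS S (hlift L h V)).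

Record GeomStr {D : Cat} (L : Doctrine D) := {
  gs_frame :> OpenFrameDoc L;
  gs_geom : geometric gs_frame }.

Definition IdPred {C : Cat} (P : Doctrine C) (c : C) :=
  forall d : C, Hom d c -> dob P d -> Prop.

Definition is_ideal {C : Cat} {P : Doctrine C} (J : CoverT (Groth P)) {c : C}
  (S : IdPred P c) : Prop :=
  (forall d (f : Hom d c) (x : dob P d), S d f x ->
     forall e (g : Hom e d) (y : dob P e), dle P y (dmap P g x) -> S e (cmp f g) y) /\
  (forall d (f : Hom d c) (x : dob P d),
     (exists (I : Type) (dom : I -> Groth P)
             (h : forall i, @Hom (Groth P) (dom i) (existT (dob P) d x)),
        covers J (existT (dob P) d x) dom h /\
        forall i, S (projT1 (dom i)) (cmp f (proj1_sig (h i))) (projT2 (dom i))) ->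
     S d f x).

Definition Icar {C : Cat} {P : Doctrine C} (J : CoverT (Groth P)) (c : C) :=
  {S : IdPred P c | is_ideal J S}.

Definition Ile {C : Cat} {P : Doctrine C} {J : CoverT (Groth P)} {c : C}
  (S T : Icar J c) : Prop :=
  forall d (f : Hom d c) x, proj1_sig S d f x -> proj1_sig T d f x.

Definition Imap {C : Cat} {P : Doctrine C} {J : CoverT (Groth P)} {c d : C}
  (f : Hom d c) (S : Icar J c) : Icar J d.
Proof.
  exists (fun e g y => proj1_sig S e (cmp f g) y).
  destruct (proj2_sig S) as [Ha Hb]. split.
  - intros e g y Hy e' k z Hz. cbv beta in *. rewrite cmp_assoc. eapply Ha; eauto.
  - intros e g y [I [dom [h [Hc Hi]]]]. cbv beta in *. apply Hb.
    exists I, dom, h. split; [exact Hc|]. intro i. rewrite <- cmp_assoc. apply Hi.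
Defined.

Definition IDoc {C : Cat} {P : Doctrine C} (J : CoverT (Groth P)) : Doctrine C.
Proof.
  refine {| dob := Icar J; dle := fun c => @Ile C P J c;
            dmap := fun c d f => @Imap C P J c d f |}.
  - intros c x d f y H; exact H.
  - intros c x y z H1 H2 d f w H; auto.
  - intros c d f x y H e g w Hw; apply H; exact Hw.
  - intros c [x Hx]. unfold Imap. apply subset_eq_compat.
    apply functional_extensionality_dep; intro e.
    apply functional_extensionality; intro g.
    apply functional_extensionality; intro y.
    simpl. rewrite cmp_idl. reflexivity.
  - intros c d e f g [x Hx]. unfold Imap. apply subset_eq_compat.
    apply functional_extensionality_dep; intro e'.
    apply functional_extensionality; intro k.
    apply functional_extensionality; intro y.
    simpl. rewrite cmp_assoc. reflexivity.
Defined.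

(* eta_c(x): smallest ideal containing {(g,y) : y <= P(g)(x)} *)
Definition eta {C : Cat} {P : Doctrine C} (J : CoverT (Groth P)) (c : C)
  (x : dob P c) : dob (IDoc J) c.
Proof.
  exists (fun d f y => forall S : Icar J c,
             (forall e (g : Hom e c) z, dle P z (dmap P g x) -> proj1_sig S e g z) ->
             proj1_sig S d f y).
  split.
  - intros d f y H e g z Hz S HS. destruct (proj2_sig S) as [Ha _].
    eapply Ha; [apply H; exact HS | exact Hz].
  - intros d f y [I [dom [h [Hc Hi]]]] S HS. destruct (proj2_sig S) as [_ Hb].
    apply Hb. exists I, dom, h. split; [exact Hc|]. intro i. apply Hi. exact HS.
Defined.

(* Main.v *)
Require Import Defs.
From Stdlib Require Import ProofIrrelevance FunctionalExtensionality PropExtensionality.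


Lemma gh_eq {C : Cat} {P : Doctrine C} {a b : GOb P} (f g : GHom P a b) :
  proj1_sig f = proj1_sig g -> f = g.
Proof. destruct f as [f Hf], g as [g Hg]; simpl; intros E. subst g. f_equal. apply proof_irrelevance. Qed.

Lemma gen_sieve_eq {C : Cat} {a : C} (R : SieveT a) : is_sieve R ->
  gen (fun i : {b : C & {f : Hom b a | R b f}} => projT1 i) (fun i => proj1_sig (projT2 i)) = R.
Proof.
  intro HR. apply functional_extensionality_dep; intro b. apply functional_extensionality; intro g.
  apply propositional_extensionality; split.
  - intros [[b' [f Hf]] [k ->]]. simpl. apply HR; exact Hf.
  - intro H. exists (existT _ b (exist _ g H)), (idm b). simpl. symmetry; apply cmp_idr.
Qed.

Lemma dle_tr {C : Cat} (P : Doctrine C) c (x y z : dob P c) : dle P x y -> dle P y z -> dle P x z.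
Proof. apply dle_trans. Qed.

Section Ideals.
Context {C : Cat} {P : Doctrine C} (J : CoverT (Groth P)) (HJ : is_topology J).

Lemma ideal_sieve {c : C} (S : IdPred P c) : is_ideal J S ->
  forall d (f : Hom d c) (x : dob P d) (R : SieveT (existT (dob P) d x : Groth P)),
  J _ R ->
  (forall b (g : @Hom (Groth P) b (existT (dob P) d x)), R b g ->
      S (projT1 b) (cmp f (proj1_sig g)) (projT2 b)) ->
  S d f x.
Proof.
  intros [_ Hb] d f x R HR Hall. apply Hb.
  exists {b : Groth P & {g : @Hom (Groth P) b (existT (dob P) d x) | R b g}},
    (fun i => projT1 i),
    (fun i : {b : Groth P & {g : @Hom (Groth P) b (existT (dob P) d x) | R b g}} =>
        proj1_sig (projT2 i)).
  split.
  - unfold covers. rewrite gen_sieve_eq. exact HR. destruct HJ as [H1 _]. exact (H1 _ _ HR).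
  - intros [b [g Hg]]. simpl. apply Hall. exact Hg.
Qed.

Lemma pull_cover (X Y : Groth P) (R : SieveT X) (g : @Hom (Groth P) Y X) :
  J X R -> J Y (pullS R g).
Proof. intro H. destruct HJ as [_ [_ [H3 _]]]. apply H3. exact H. Qed.

Definition clo {c : C} (T : IdPred P c) : IdPred P c :=
  fun d f y => forall S : Icar J c,
    (forall e g z, T e g z -> proj1_sig S e g z) -> proj1_sig S d f y.

Lemma clo_ideal {c} (T : IdPred P c) : is_ideal J (clo T).
Proof.
  split.
  - intros d f y H e g z Hz S HS. destruct (proj2_sig S) as [Ha _].
    eapply Ha; [apply H; exact HS | exact Hz].
  - intros d f y [I [dom [h [Hc Hi]]]] S HS. destruct (proj2_sig S) as [_ Hb].
    apply Hb. exists I, dom, h. split; [exact Hc|]. intro i. apply Hi. exact HS.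
Qed.

Definition cloI {c} (T : IdPred P c) : Icar J c := exist _ (clo T) (clo_ideal T).

Lemma clo_incl {c} (T : IdPred P c) e g z : T e g z -> clo T e g z.
Proof. intros H S HS. apply HS, H. Qed.

Lemma clo_least {c} (T S : IdPred P c) : is_ideal J S ->
  (forall e g z, T e g z -> S e g z) -> forall d f y, clo T d f y -> S d f y.
Proof. intros HS HT d f y H. exact (H (exist _ S HS) HT). Qed.

Definition down {c} (S : IdPred P c) := forall d (f : Hom d c) (x : dob P d), S d f x ->
     forall e (g : Hom e d) (y : dob P e), dle P y (dmap P g x) -> S e (cmp f g) y.

Lemma ideal_down {c} (S : IdPred P c) : is_ideal J S -> down S.
Proof. intros [H _]; exact H. Qed.

Definition imp {c} (S R : IdPred P c) : IdPred P c :=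
  fun d f x => forall e (g : Hom e d) (y : dob P e), dle P y (dmap P g x) ->
     S e (cmp f g) y -> R e (cmp f g) y.

Lemma imp_ideal {c} (S R : IdPred P c) : down S -> is_ideal J R -> is_ideal J (imp S R).
Proof.
  intros HS HR. split.
  - intros d f x H e g y Hy e' g' y' Hy' HSy.
    rewrite <- cmp_assoc in HSy |- *. apply H; [|exact HSy].
    rewrite dmap_cmp. eapply dle_tr; [exact Hy'|]. apply dmap_mono. exact Hy.
  - intros d f x [I [dom [h [Hc Hi]]]] e g y Hy HSy.
    set (garr := exist (fun g0 => dle P y (dmap P g0 x)) g Hy
                  : @Hom (Groth P) (existT (dob P) e y) (existT (dob P) d x)).
    apply (ideal_sieve _ HR e (cmp f g) y (pullS (gen dom h) garr)).
    + apply pull_cover. exact Hc.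
    + intros b k [i [m Hm]].
      assert (E : cmp g (proj1_sig k) = cmp (proj1_sig (h i)) (proj1_sig m)).
      { apply (f_equal (@proj1_sig _ _)) in Hm. exact Hm. }
      rewrite <- cmp_assoc, E, cmp_assoc. apply Hi.
      * exact (proj2_sig m).
      * cbn [projT1 projT2] in *. rewrite <- cmp_assoc, <- E, cmp_assoc. exact (HS _ _ _ HSy _ _ _ (proj2_sig k)).
Qed.

Definition pi {c d} (h : Hom d c) (R : IdPred P d) : IdPred P c :=
  fun e k w => forall e' (m : Hom e' d) (n : Hom e' e) (w' : dob P e'),
      cmp h m = cmp k n -> dle P w' (dmap P n w) -> R e' m w'.

Lemma pi_ideal {c d} (h : Hom d c) (R : IdPred P d) : is_ideal J R -> is_ideal J (pi h R).
Proof.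
  intros HR. split.
  - intros e k w H e2 g y Hy e' m n w' Em Hw'.
    apply (H e' m (cmp g n) w').
    + rewrite Em. symmetry; apply cmp_assoc.
    + rewrite dmap_cmp. eapply dle_tr; [exact Hw'|]. apply dmap_mono. exact Hy.
  - intros e k w [I [dom [h0 [Hc Hi]]]] e' m n w' Em Hw'.
    set (narr := exist (fun g0 => dle P w' (dmap P g0 w)) n Hw'
                  : @Hom (Groth P) (existT (dob P) e' w') (existT (dob P) e w)).
    apply (ideal_sieve _ HR e' m w' (pullS (gen dom h0) narr)).
    + apply pull_cover. exact Hc.
    + intros b j [i [l Hl]].
      assert (E : cmp n (proj1_sig j) = cmp (proj1_sig (h0 i)) (proj1_sig l)).
      { apply (f_equal (@proj1_sig _ _)) in Hl. exact Hl. }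
      apply (Hi i (projT1 b) (cmp m (proj1_sig j)) (proj1_sig l) (projT2 b)).
      * rewrite cmp_assoc, Em, <- cmp_assoc, E, cmp_assoc. reflexivity.
      * exact (proj2_sig l).
Qed.

Lemma Iext {c} (S T : Icar J c) :
  (forall d f x, proj1_sig S d f x <-> proj1_sig T d f x) -> S = T.
Proof.
  destruct S as [S HS], T as [T HT]; simpl; intro H.
  assert (S = T).
  { apply functional_extensionality_dep; intro d. apply functional_extensionality; intro f.
    apply functional_extensionality; intro x. apply propositional_extensionality. apply H. }
  subst T. f_equal. apply proof_irrelevance.
Qed.

Lemma eta_clo c x : proj1_sig (eta J c x) = clo (fun e g z => dle P z (dmap P g x)).
Proof. reflexivity. Qed.

Lemma refine_eta {c d} (S : IdPred P d) (g : Hom d c) (x : dob P c) :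
  down S -> (forall e h y, S e h y -> proj1_sig (eta J c x) e (cmp g h) y) ->
  forall e h y, S e h y ->
    clo (fun e h y => S e h y /\ dle P y (dmap P (cmp g h) x)) e h y.
Proof.
  intros HS Hsub.
  set (T' := fun e h y => S e h y /\ dle P y (dmap P (cmp g h) x)).
  assert (Hpi : forall e1 k w, proj1_sig (eta J c x) e1 k w -> pi g (imp S (clo T')) e1 k w).
  { apply clo_least. apply pi_ideal, imp_ideal; [exact HS| apply clo_ideal].
    intros e1 k w Hw e' m n w' Em Hw' e2 m2 y2 Hy2 HS2. apply clo_incl. split; [exact HS2|].
    rewrite cmp_assoc, Em, <- cmp_assoc, dmap_cmp, dmap_cmp.
    eapply dle_tr; [exact Hy2|]. apply dmap_mono. eapply dle_tr; [exact Hw'|].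
    apply dmap_mono. exact Hw. }
  intros e h y Hy.
  assert (H1 := Hpi _ _ _ (Hsub _ _ _ Hy) e h (idm e) y (eq_sym (cmp_idr _ _ _ _))).
  rewrite dmap_id in H1. specialize (H1 (dle_refl _ _ _ _) e (idm e) y).
  rewrite dmap_id, cmp_idr in H1. apply H1. apply dle_refl. exact Hy.
Qed.

End Ideals.


Section Frame.
Context {D : Cat} {L : Doctrine D} (G : OpenFrameDoc L).

Lemma fle_tr c (x y z : dob L c) : dle L x y -> dle L y z -> dle L x z.
Proof. apply dle_trans. Qed.
Lemma fle_refl c (x : dob L c) : dle L x x.
Proof. apply dle_refl. Qed.

Lemma ex_unit c d (f : Hom d c) U : dle L U (dmap L f (of_ex G f U)).
Proof. apply (of_ex_adj _ G). apply fle_refl. Qed.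

Lemma ex_le c d (f : Hom d c) U V : dle L U (dmap L f V) -> dle L (of_ex G f U) V.
Proof. apply (of_ex_adj _ G). Qed.

Lemma ex_le_inv c d (f : Hom d c) U V : dle L (of_ex G f U) V -> dle L U (dmap L f V).
Proof. apply (of_ex_adj _ G). Qed.

Lemma ex_mono c d (f : Hom d c) U U' : dle L U U' -> dle L (of_ex G f U) (of_ex G f U').
Proof. intro H. apply ex_le. eapply fle_tr; [exact H|apply ex_unit]. Qed.

Lemma fantisym c (x y : dob L c) : dle L x y -> dle L y x -> x = y.
Proof. apply (of_antisym _ G). Qed.

Lemma ex_cmp c d e (f : Hom d c) (g : Hom e d) U :
  of_ex G (cmp f g) U = of_ex G f (of_ex G g U).
Proof.
  apply fantisym.
  - apply ex_le. rewrite dmap_cmp. eapply fle_tr; [apply (ex_unit _ _ g)|].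
    apply dmap_mono. apply ex_unit.
  - apply ex_le. apply ex_le. rewrite <- dmap_cmp. apply ex_unit.
Qed.

Lemma ex_id c U : of_ex G (idm c) U = U.
Proof.
  apply fantisym.
  - apply ex_le. rewrite dmap_id. apply fle_refl.
  - generalize (ex_unit _ _ (idm c) U). rewrite dmap_id. auto.
Qed.

Lemma join_ub c (S : dob L c -> Prop) x : S x -> dle L x (of_join G c S).
Proof. apply of_join_ub. Qed.
Lemma join_lub c (S : dob L c -> Prop) y : (forall x, S x -> dle L x y) -> dle L (of_join G c S) y.
Proof. apply of_join_lub. Qed.

Lemma meet_comm c (x y : dob L c) : of_meet L G c x y = of_meet L G c y x.
Proof. apply fantisym; apply of_meet_glb; (apply of_meet_l || apply of_meet_r). Qed.

Lemma arrow_ex (X Y : Groth L) (f : @Hom (Groth L) X Y) :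
  dle L (of_ex G (proj1_sig f) (projT2 X)) (projT2 Y).
Proof. apply ex_le. exact (proj2_sig f). Qed.

Definition exS {X : Groth L} (R : SieveT X) : dob L (projT1 X) -> Prop :=
  fun Z => exists b (f : @Hom (Groth L) b X), R b f /\ Z = of_ex G (proj1_sig f) (projT2 b).

Lemma KL_le (X : Groth L) (R : SieveT X) : KL G X R -> forall Y,
  (forall b (f : @Hom (Groth L) b X), R b f -> dle L (of_ex G (proj1_sig f) (projT2 b)) Y) ->
  dle L (projT2 X) Y.
Proof.
  unfold KL. intros H Y HY. rewrite H. apply join_lub. intros x [b [f [Hf ->]]]. apply HY, Hf.
Qed.

Lemma KL_intro (X : Groth L) (R : SieveT X) :
  (forall Y, (forall b (f : @Hom (Groth L) b X), R b f ->
       dle L (of_ex G (proj1_sig f) (projT2 b)) Y) -> dle L (projT2 X) Y) ->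
  KL G X R.
Proof.
  intro H. unfold KL. apply fantisym.
  - apply H. intros b f Hf. apply join_ub. exists b, f. split; auto.
  - apply join_lub. intros x [b [f [Hf ->]]]. apply arrow_ex.
Qed.

Lemma KL_mono (X : Groth L) (R R' : SieveT X) : KL G X R ->
  (forall b f, R b f -> R' b f) -> KL G X R'.
Proof.
  intros H HR. apply KL_intro. intros Y HY. apply (KL_le _ _ H). intros b f Hf. apply HY, HR, Hf.
Qed.

Lemma KL_trans (X : Groth L) (R R' : SieveT X) : KL G X R ->
  (forall b (f : @Hom (Groth L) b X), R b f -> KL G b (pullS R' f)) -> KL G X R'.
Proof.
  intros H HR. apply KL_intro. intros Y HY. apply (KL_le _ _ H). intros b f Hf.
  apply ex_le. apply (KL_le _ _ (HR _ _ Hf)). intros b' g Hg.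
  apply ex_le. rewrite <- dmap_cmp. apply ex_le_inv.
  exact (HY _ _ Hg).
Qed.

Lemma KL_stab (Hgeo : geometric G) (X Y : Groth L) (R : SieveT X) (k : @Hom (Groth L) Y X) :
  is_sieve R -> KL G X R -> KL G Y (pullS R k).
Proof.
  destruct X as [d W], Y as [e W']. destruct k as [kk Hk]. intros HR HK.
  assert (HG := Hgeo d e kk W R HR HK).
  apply KL_intro. intros Y0 HY. cbn [projT1 projT2] in *.
  set (im := of_join G e (fun z => dle L (of_meet L G e W' z) Y0)).
  assert (H1 : dle L (dmap L kk W) im).
  { apply (KL_le _ _ HG im). intros b g Hg. apply join_ub.
    rewrite meet_comm, <- (of_frob _ G).
    set (g' := exist (fun g0 => dle L (of_meet L G _ (projT2 b) (dmap L (proj1_sig g) W')) (dmap L g0 W'))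
                   (proj1_sig g) (of_meet_r _ G _ _ _)
               : @Hom (Groth L) (existT (dob L) (projT1 b) (of_meet L G _ (projT2 b) (dmap L (proj1_sig g) W')))
                   (existT (dob L) e W')).
    apply (HY _ g').
    unfold pullS in Hg |- *.
    set (iota := exist (fun g0 => dle L (of_meet L G _ (projT2 b) (dmap L (proj1_sig g) W')) (dmap L g0 (projT2 b)))
                   (idm (projT1 b)) (eq_ind_r (fun z => dle L _ z) (of_meet_l _ G _ _ _) (dmap_id _ _ _ _))
               : @Hom (Groth L) (existT (dob L) (projT1 b) (of_meet L G _ (projT2 b) (dmap L (proj1_sig g) W'))) b).
    assert (E : cmp (cmp (hlift L kk W) g) iota =
                cmp (exist (fun g0 => dle L W' (dmap L g0 W)) kk Hk : @Hom (Groth L) (existT (dob L) e W') (existT (dob L) d W)) g').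
    { apply gh_eq. simpl. rewrite cmp_idr. reflexivity. }
    enough (H : R _ (cmp (cmp (hlift L kk W) g) iota)) by (rewrite E in H; exact H).
    apply HR. exact Hg. }
  eapply fle_tr. { apply (of_meet_glb _ G _ W' (dmap L kk W) W'); [apply fle_refl|exact Hk]. }
  eapply fle_tr. { apply (of_meet_glb _ G _ W' im _); [apply of_meet_l|].
                   eapply fle_tr; [apply of_meet_r|exact H1]. }
  unfold im. rewrite (of_distr _ G). apply join_lub. intros x [y [Hy ->]]. exact Hy.
Qed.

End Frame.


Definition compPF {A B E : Cat} (F1 : PreFunctor A B) (F2 : PreFunctor B E) : PreFunctor A E :=
  {| pobj := fun a => pobj F2 (pobj F1 a); pmap := fun a b f => pmap F2 (pmap F1 f) |}.

Definition cov_props {E : Cat} (J3 : CoverT E) : Prop :=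
  (forall X (R R' : SieveT X), J3 X R -> (forall b f, R b f -> R' b f) -> J3 X R') /\
  (forall X Y (R : SieveT X) (k : Hom Y X), is_sieve R -> J3 X R -> J3 Y (pullS R k)) /\
  (forall X (R R' : SieveT X), J3 X R -> (forall b f, R b f -> J3 b (pullS R' f)) -> J3 X R').

Lemma gen_sieve {C : Cat} {a : C} {I} (dom : I -> C) (arr : forall i, Hom (dom i) a) :
  is_sieve (gen dom arr).
Proof. intros b f [i [k ->]] e g. exists i, (cmp k g). symmetry; apply cmp_assoc. Qed.

Lemma cover_good {E : Cat} (J3 : CoverT E) (HP : cov_props J3) (X : E) (R : SieveT X)
  (Pr : forall b, Hom b X -> Prop) :
  J3 X R -> (forall b f, R b f -> Pr b f) ->
  exists (I : Type) (dom : I -> E) (h : forall i, Hom (dom i) X),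
    covers J3 X dom h /\ forall i, Pr (dom i) (h i).
Proof.
  intros H HR. exists {b : E & {f : Hom b X | Pr b f}}, (fun i => projT1 i),
    (fun i : {b : E & {f : Hom b X | Pr b f}} => proj1_sig (projT2 i)).
  split.
  - destruct HP as [HM _]. apply (HM _ R); [exact H|]. intros b f Hf.
    exists (existT _ b (exist _ f (HR _ _ Hf))), (idm b). simpl. symmetry; apply cmp_idr.
  - intros [b [f Hf]]. exact Hf.
Qed.

Lemma eq_post {C : Cat} {a b b' c d : C} (f : Hom c d) (g : Hom b c) (f' : Hom b' d) (g' : Hom b b')
  (h : Hom a b) : cmp f g = cmp f' g' -> cmp f (cmp g h) = cmp f' (cmp g' h).
Proof. intro H. rewrite !cmp_assoc, H. reflexivity. Qed.

Section Comp.
Context {A B E : Cat} (J1 : CoverT A) (J2 : CoverT B) (J3 : CoverT E)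
  (F1 : PreFunctor A B) (F2 : PreFunctor B E) (HP : cov_props J3)
  (Hpres : forall a b c (f : Hom b c) (g : Hom a b), pmap F2 (cmp f g) = cmp (pmap F2 f) (pmap F2 g))
  (H1 : is_site_morphism J1 J2 F1) (H2 : is_site_morphism J2 J3 F2).

Lemma pull_image (b : B) {I} (dom : I -> B) (h : forall i, Hom (dom i) b) :
  covers J2 b dom h -> forall y (u : Hom y (pobj F2 b)),
  J3 y (fun z g => exists j b0 (n : Hom b0 (dom j)) (l : Hom z (pobj F2 b0)),
           cmp u g = cmp (pmap F2 (cmp (h j) n)) l).
Proof.
  intros Hc y u. destruct H2 as [Hi _]. assert (H := Hi b _ Hc).
  destruct HP as [HM [HS _]].
  unfold covers in H. apply (HM _ _ _ (HS _ _ _ u (gen_sieve _ _) H)).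
  - intros z g [[b0 [w [j [n Hw]]]] [k Hk]]. simpl in Hk. subst w.
    exists j, b0, n, k. exact Hk.
Qed.

Lemma comp_site : is_site_morphism J1 J3 (compPF F1 F2).
Proof.
  destruct HP as [HM [HS HT]].
  destruct H1 as [i1 [ii1 [iii1 iv1]]]. destruct H2 as [i2 [ii2 [iii2 iv2]]].
  split; [|split; [|split]].
  -
    intros a S HSa. unfold covers. assert (Hc := i2 _ _ (i1 a S HSa)).
    apply (HM _ _ _ Hc). intros z g [[b0 [w [[b1 [f Hf]] [k Hk]]]] [l Hl]].
    simpl in Hk, Hl. subst w.
    exists (existT _ b1 (exist _ f Hf)), (cmp (pmap F2 k) l). simpl.
    rewrite Hl, Hpres. symmetry; apply cmp_assoc.
  -
    intro e. destruct (ii2 e) as [I [dom [h [Hc Hd]]]].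
    set (Good := fun z (g : Hom z e) => exists a, inhabited (Hom z (pobj F2 (pobj F1 a)))).
    apply (cover_good J3 (conj HM (conj HS HT)) e Good Good).
    + apply (HT _ _ _ Hc). intros b f [i [m Hm]].
      destruct (Hd i) as [c [u]].
      destruct (ii1 c) as [I' [dom' [h' [Hc' Hd']]]].
      apply (HM _ _ _ (pull_image c dom' h' Hc' _ (cmp u m))).
      intros z g [j [b0 [n [l _]]]]. destruct (Hd' j) as [a [v]].
      exists a. constructor. exact (cmp (pmap F2 (cmp v n)) l).
    + intros b f Hf; exact Hf.
  -
    intros c1 c2 e g1 g2.
    destruct (iii2 _ _ e g1 g2) as [I [dom [h [Hc Hd]]]].
    set (Good := fun z (g : Hom z e) => exists c (f1' : Hom c c1) (f2' : Hom c c2)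
                  (k' : Hom z (pobj F2 (pobj F1 c))),
                  cmp (pmap F2 (pmap F1 f1')) k' = cmp g1 g /\
                  cmp (pmap F2 (pmap F1 f2')) k' = cmp g2 g).
    apply (cover_good J3 (conj HM (conj HS HT)) e Good Good); [|auto].
    apply (HT _ _ _ Hc). intros b f [i [m ->]].
    destruct (Hd i) as [b1 [f1 [f2 [k [Ek1 Ek2]]]]].
    destruct (iii1 _ _ _ f1 f2) as [I' [dom' [h' [Hc' Hd']]]].
    apply (HM _ _ _ (pull_image b1 dom' h' Hc' _ (cmp k m))).
    intros z g [j [b0 [n [l Hl]]]].
    destruct (Hd' j) as [c [f1' [f2' [kj [Ej1 Ej2]]]]].
    exists c, f1', f2', (cmp (pmap F2 (cmp kj n)) l).
    split.
    + rewrite cmp_assoc, <- Hpres, cmp_assoc, Ej1, <- cmp_assoc, Hpres, <- cmp_assoc, <- Hl,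
        !cmp_assoc, Ek1. reflexivity.
    + rewrite cmp_assoc, <- Hpres, cmp_assoc, Ej2, <- cmp_assoc, Hpres, <- cmp_assoc, <- Hl,
        !cmp_assoc, Ek2. reflexivity.
  -
    intros c1 c2 f1 f2 e g Eg.
    destruct (iv2 _ _ _ _ e g Eg) as [I [dom [h [Hc Hd]]]].
    set (Good := fun z (g' : Hom z e) => exists c (e' : Hom c c1)
                  (k' : Hom z (pobj F2 (pobj F1 c))),
                  cmp f1 e' = cmp f2 e' /\ cmp (pmap F2 (pmap F1 e')) k' = cmp g g').
    apply (cover_good J3 (conj HM (conj HS HT)) e Good Good); [|auto].
    apply (HT _ _ _ Hc). intros b f [i [m ->]].
    destruct (Hd i) as [b1 [e1 [k [Ee1 Ek]]]].
    destruct (iv1 _ _ _ _ _ e1 Ee1) as [I' [dom' [h' [Hc' Hd']]]].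
    apply (HM _ _ _ (pull_image b1 dom' h' Hc' _ (cmp k m))).
    intros z g' [j [b0 [n [l Hl]]]].
    destruct (Hd' j) as [c [e' [kj [Ej1 Ej2]]]].
    exists c, e', (cmp (pmap F2 (cmp kj n)) l).
    split; [exact Ej1|].
    rewrite cmp_assoc, <- Hpres, cmp_assoc, Ej2, <- cmp_assoc, Hpres, <- cmp_assoc, <- Hl,
        !cmp_assoc, Ek. reflexivity.
Qed.

End Comp.


Section IFrameSec.
Context {C : Cat} {P : Doctrine C} (J : CoverT (Groth P)) (HJ : is_topology J).

Definition Ijoin c (Phi : Icar J c -> Prop) : Icar J c :=
  cloI J (fun d f y => exists S : Icar J c, Phi S /\ proj1_sig S d f y).

Lemma meet_ideal c (S T : Icar J c) :
  is_ideal J (fun d f y => proj1_sig S d f y /\ proj1_sig T d f y).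
Proof.
  destruct (proj2_sig S) as [Sa Sb], (proj2_sig T) as [Ta Tb]. split.
  - intros d f x [H1 H2] e g y Hy. split; [eapply Sa|eapply Ta]; eauto.
  - intros d f x [I [dom [h [Hc Hi]]]]. split; [apply Sb|apply Tb]; exists I, dom, h;
      split; auto; intro i; apply Hi.
Qed.

Definition Imeet c (S T : Icar J c) : Icar J c := exist _ _ (meet_ideal c S T).

Lemma top_ideal c : is_ideal J (fun (d : C) (f : Hom d c) (y : dob P d) => True).
Proof. split; auto. Qed.

Definition Itop c : Icar J c := exist _ _ (top_ideal c).

Definition Iex c d (f : Hom d c) (U : Icar J d) : Icar J c :=
  cloI J (fun e g z => exists k, g = cmp f k /\ proj1_sig U e k z).

Lemma I_distr c (x : Icar J c) (S : Icar J c -> Prop) :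
  Imeet c x (Ijoin c S) = Ijoin c (fun z => exists y, S y /\ z = Imeet c x y).
Proof.
  apply (Iext J). intros d f y. simpl. split.
  - intros [H1 H2].
    assert (Hc : forall d f y, clo J (fun d f y => exists S0 : Icar J c, S S0 /\ proj1_sig S0 d f y) d f y ->
        imp (proj1_sig x) (clo J (fun d f y => exists S0 : Icar J c,
             (exists y0, S y0 /\ S0 = Imeet c x y0) /\ proj1_sig S0 d f y)) d f y).
    { apply clo_least. apply (imp_ideal J HJ). apply (ideal_down J), (proj2_sig x). apply clo_ideal.
      intros e g z [T [HT Hz]] e' g' y' Hy' Hx. apply clo_incl. exists (Imeet c x T).
      split; [exists T; auto|]. simpl. split; [exact Hx|].
      exact (ideal_down J _ (proj2_sig T) _ _ _ Hz _ _ _ Hy'). }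
    specialize (Hc _ _ _ H2 d (idm d) y). rewrite cmp_idr, dmap_id in Hc.
    apply Hc; [apply dle_refl|exact H1].
  - intro H. refine (clo_least J _ _ (meet_ideal c x (Ijoin c S)) _ _ _ _ H).
    intros e g z [Z [[T [HT ->]] [Hx HTz]]].
    split; [exact Hx|]. apply clo_incl. exists T; auto.
Qed.

Lemma I_map_join c d (f : Hom d c) (S : Icar J c -> Prop) :
  Imap f (Ijoin c S) = Ijoin d (fun z => exists y, S y /\ z = Imap f y).
Proof.
  apply (Iext J). intros e g y. simpl. split.
  - intro H.
    assert (Hc : forall e k w, clo J (fun d f y => exists S0 : Icar J c, S S0 /\ proj1_sig S0 d f y) e k w ->
       pi f (clo J (fun d0 f0 y0 => exists S0 : Icar J d,
             (exists y1, S y1 /\ S0 = Imap f y1) /\ proj1_sig S0 d0 f0 y0)) e k w).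
    { apply clo_least. apply (pi_ideal J HJ), clo_ideal.
      intros e0 k w [T [HT Hw]] e' m n w' Em Hw'. apply clo_incl. exists (Imap f T).
      split; [exists T; auto|]. simpl. rewrite Em.
      exact (ideal_down J _ (proj2_sig T) _ _ _ Hw _ _ _ Hw'). }
    apply (Hc _ _ _ H e g (idm e) y). symmetry; apply cmp_idr. rewrite dmap_id. apply dle_refl.
  - intro H. refine (clo_least J _ _ (proj2_sig (Imap f (Ijoin c S))) _ _ _ _ H).
    intros e0 g0 z [Z [[T [HT ->]] Hz]]. simpl in Hz |- *. apply clo_incl. exists T; auto.
Qed.

Lemma I_ex_adj c d (f : Hom d c) (U : Icar J d) (V : Icar J c) :
  Ile (Iex c d f U) V <-> Ile U (Imap f V).
Proof.
  split.
  - intros H e g z Hz. simpl. apply H. apply clo_incl. exists g; auto.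
  - intros H. unfold Ile. apply clo_least. apply (proj2_sig V).
    intros e g z [k [-> Hk]]. apply (H _ _ _ Hk).
Qed.

Lemma I_frob c d (f : Hom d c) (U : Icar J d) (V : Icar J c) :
  Iex c d f (Imeet d U (Imap f V)) = Imeet c (Iex c d f U) V.
Proof.
  apply (Iext J). intros e g y. split.
  - intro H. refine (clo_least J _ _ (meet_ideal c (Iex c d f U) V) _ _ _ _ H).
    intros e0 g0 z [k [-> [Hk1 Hk2]]]. split; [apply clo_incl; exists k; auto| exact Hk2].
  - intros [H1 H2].
    assert (Hc : forall e g z, clo J (fun e g z => exists k, g = cmp f k /\ proj1_sig U e k z) e g z ->
       imp (proj1_sig V) (proj1_sig (Iex c d f (Imeet d U (Imap f V)))) e g z).
    { apply clo_least. apply (imp_ideal J HJ). apply (ideal_down J), (proj2_sig V). apply clo_ideal.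
      intros e0 g0 z [k [-> Hk]] e' g' y' Hy' HV. apply clo_incl. exists (cmp k g').
      split; [symmetry; apply cmp_assoc|]. simpl. split.
      + exact (ideal_down J _ (proj2_sig U) _ _ _ Hk _ _ _ Hy').
      + rewrite cmp_assoc. exact HV. }
    specialize (Hc _ _ _ H1 e (idm e) y). rewrite cmp_idr, dmap_id in Hc.
    apply Hc; [apply dle_refl|exact H2].
Qed.

Definition IFrame : OpenFrameDoc (IDoc J).
Proof.
  refine (@Build_OpenFrameDoc C (IDoc J) _ Ijoin _ _ Imeet _ _ _ Itop _ _ _ _ _ Iex _ _).
  - intros c x y H1 H2. apply (Iext J). intros; split; [apply H1|apply H2].
  - intros c S x Hx d f y Hy. apply clo_incl. exists x; auto.
  - intros c S y H d f w Hw. refine (clo_least J _ _ (proj2_sig y) _ _ _ _ Hw).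
    intros e g z [T [HT Hz]]. exact (H T HT _ _ _ Hz).
  - intros c x y d f z [H _]; exact H.
  - intros c x y d f z [_ H]; exact H.
  - intros c x y z H1 H2 d f w Hw; split; [apply H1|apply H2]; exact Hw.
  - intros c x d f y _; exact I.
  - apply I_distr.
  - intros c d f x y. apply (Iext J). intros; simpl; tauto.
  - intros c d f. apply (Iext J). intros; simpl; tauto.
  - apply I_map_join.
  - apply I_ex_adj.
  - apply I_frob.
Defined.

Definition supp {X : Groth (IDoc J)} (R : SieveT X) : IdPred P (projT1 X) :=
  fun e m w => exists b (f : @Hom (Groth (IDoc J)) b X) (k : Hom e (projT1 b)),
    R b f /\ m = cmp (proj1_sig f) k /\ proj1_sig (projT2 b : Icar J _) e k w.

Lemma KLI_le (G : OpenFrameDoc (IDoc J)) (X : Groth (IDoc J)) (R : SieveT X) :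
  KL G X R -> forall Q : IdPred P (projT1 X), is_ideal J Q ->
  (forall e m w, supp R e m w -> Q e m w) ->
  forall d g y, proj1_sig (projT2 X : Icar J _) d g y -> Q d g y.
Proof.
  intros HK Q HQ Hs. apply (KL_le G X R HK (exist _ Q HQ : Icar J _)).
  intros b f Hf. apply ex_le. intros e k w Hw. simpl. apply Hs. exists b, f, k; auto.
Qed.

Lemma KLI_intro (G : OpenFrameDoc (IDoc J)) (X : Groth (IDoc J)) (R : SieveT X) :
  (forall d g y, proj1_sig (projT2 X : Icar J _) d g y -> clo J (supp R) d g y) -> KL G X R.
Proof.
  intros H. apply KL_intro. intros Y HY d g y Hy. generalize (H _ _ _ Hy).
  apply clo_least. apply (proj2_sig Y).
  intros e m w [b [f [k [Hf [-> Hk]]]]]. exact (ex_le_inv G _ _ _ _ _ (HY _ _ Hf) _ _ _ Hk).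
Qed.

Lemma IFrame_geom : geometric IFrame.
Proof.
  intros d e h V S HS HK. apply KLI_intro. cbn [projT1 projT2]. intros d' g y Hy. simpl in Hy.
  set (R' := supp (pullS S (hlift (IDoc J) h V))).
  assert (Hc : forall e0 k w, proj1_sig V e0 k w -> pi h (clo J R') e0 k w).
  { apply (KLI_le IFrame _ S HK). apply (pi_ideal J HJ), clo_ideal.
    intros e0 m w [b [f [k [Hf [-> Hk]]]]] e' m' n w' Em Hw'.
    apply clo_incl.
    assert (Hp : Ile (Imap (cmp k n) (projT2 b : Icar J _))
                     (Imap m' (Imap h V))).
    { intros j u v Hv. simpl in Hv |- *. rewrite cmp_assoc, Em, <- !cmp_assoc.
      generalize (proj2_sig f _ _ _ Hv). simpl. rewrite <- !cmp_assoc. auto. }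
    set (g' := exist _ m' Hp : @Hom (Groth (IDoc J)) (existT (dob (IDoc J)) e' (Imap (cmp k n) (projT2 b : Icar J _)))
                              (existT (dob (IDoc J)) e (dmap (IDoc J) h V))).
    exists (existT (dob (IDoc J)) e' (Imap (cmp k n) (projT2 b : Icar J _))), g', (idm e').
    split; [|split].
    - unfold pullS.
      set (iota := exist (fun g0 => Ile (Imap (cmp k n) (projT2 b : Icar J _)) (Imap g0 (projT2 b : Icar J _)))
                     (cmp k n) (fun _ _ _ H0 => H0)
            : @Hom (Groth (IDoc J)) (existT (dob (IDoc J)) e' (Imap (cmp k n) (projT2 b : Icar J _))) b).
      assert (E : cmp f iota = cmp (hlift (IDoc J) h V) g').
      { apply gh_eq. simpl. rewrite Em, cmp_assoc. reflexivity. }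
      rewrite <- E. apply HS. exact Hf.
    - simpl. symmetry; apply cmp_idr.
    - simpl. rewrite cmp_idr. exact (ideal_down J _ (proj2_sig (projT2 b : Icar J _)) _ _ _ Hk _ _ _ Hw'). }
  apply (Hc _ _ _ Hy d' g (idm d') y). symmetry; apply cmp_idr. rewrite dmap_id; apply dle_refl.
Qed.

Definition IGeom : GeomStr (IDoc J) := {| gs_frame := IFrame; gs_geom := IFrame_geom |}.

End IFrameSec.


Lemma triv_id {C : Cat} (d : C) : covers (triv C) d (fun _ : unit => d) (fun _ => idm d).
Proof. intros b f. exists tt, f. symmetry; apply cmp_idl. Qed.

Lemma flat_id (C : Cat) : is_flat (idF C).
Proof.
  split; [|split; [|split]].
  - intros a S HS b f. simpl in f. exists (existT _ b (exist _ f (HS b f))), (idm b).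
    simpl. symmetry; apply cmp_idr.
  - intros d. exists unit, (fun _ => d), (fun _ => idm d). split; [apply triv_id|].
    intros _. exists d. constructor. exact (idm d).
  - intros c1 c2 d g1 g2. exists unit, (fun _ => d), (fun _ => idm d). split; [apply triv_id|].
    intros _. exists d, g1, g2, (idm d). simpl. auto.
  - intros c1 c2 f1 f2 d g Eg. exists unit, (fun _ => d), (fun _ => idm d). split; [apply triv_id|].
    intros _. exists d, g, (idm d). simpl. simpl in Eg. split; [exact Eg|reflexivity].
Qed.

Section EtaSec.
Context {C : Cat} {P : Doctrine C} (J : CoverT (Groth P)) (HJ : is_topology J).

Lemma eta_mono c (x y : dob P c) : dle P x y -> Ile (eta J c x) (eta J c y).
Proof.
  intros H d f z Hz. refine (clo_least J _ _ (proj2_sig (eta J c y)) _ _ _ _ Hz).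
  intros e g w Hw. apply (clo_incl J). eapply dle_tr; [exact Hw|]. apply dmap_mono, H.
Qed.

Lemma eta_nat c d (f : Hom d c) (x : dob P c) : eta J d (dmap P f x) = Imap f (eta J c x).
Proof.
  apply (Iext J). intros e g y. split.
  - intro H. refine (clo_least J _ _ (proj2_sig (Imap f (eta J c x))) _ _ _ _ H).
    intros e0 g0 z Hz. simpl. apply (clo_incl J). rewrite dmap_cmp. exact Hz.
  - intro H.
    assert (Hc : forall e k w, proj1_sig (eta J c x) e k w -> pi f (proj1_sig (eta J d (dmap P f x))) e k w).
    { intros e0 k w Hw. refine (clo_least J _ _ (pi_ideal J HJ f _ (proj2_sig (eta J d (dmap P f x)))) _ _ _ _ Hw).
      intros e1 k1 w1 Hw1 e' m n w' Em Hw'. apply (clo_incl J).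
      rewrite <- dmap_cmp, Em, dmap_cmp. eapply dle_tr; [exact Hw'|]. apply dmap_mono. exact Hw1. }
    apply (Hc _ _ _ H e g (idm e) y). symmetry; apply cmp_idr. rewrite dmap_id; apply dle_refl.
Qed.

Lemma eta_nat_mono : nat_mono P (IDoc J) (idF C) (eta J).
Proof. split. apply eta_mono. intros c d f x. apply eta_nat. Qed.

Lemma eta_in c (x : dob P c) : proj1_sig (eta J c x) c (idm c) x.
Proof. apply (clo_incl J). rewrite dmap_id. apply dle_refl. Qed.

Lemma eta_below c d (f : Hom d c) (x : dob P d) (S : Icar J c) :
  proj1_sig S d f x -> Ile (eta J d x) (Imap f S).
Proof.
  intros H e g y Hy. refine (clo_least J _ _ (proj2_sig (Imap f S)) _ _ _ _ Hy).
  intros e0 g0 z Hz. simpl. exact (ideal_down J _ (proj2_sig S) _ _ _ H _ _ _ Hz).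
Qed.

Lemma eta_site (GI : OpenFrameDoc (IDoc J)) :
  is_site_morphism J (KL GI) (groth_pf eta_nat_mono).
Proof.
  split; [|split; [|split]].
  -
    intros [c x] S HS. unfold covers. apply KLI_intro. cbn [projT1 projT2]. intros d g y Hy.
    refine (clo_least J _ _ (clo_ideal J _) _ _ _ _ Hy).
    intros e g0 z Hz.
    set (garr := exist (fun g1 => dle P z (dmap P g1 x)) g0 Hz
           : @Hom (Groth P) (existT (dob P) e z) (existT (dob P) c x)).
    apply (ideal_sieve J HJ _ (clo_ideal J _) e g0 z (pullS S garr)).
    { destruct HJ as [_ [_ [H3 _]]]. apply H3, HS. }
    intros b k Hk. apply (clo_incl J).
    exists (pobj (groth_pf eta_nat_mono) b),
      (pmap (groth_pf eta_nat_mono) (cmp garr k)), (idm _).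
    split; [|split].
    + exists (existT _ b (exist _ (cmp garr k) Hk)), (idm _). symmetry; apply cmp_idr.
    + simpl. rewrite cmp_idr. reflexivity.
    + apply eta_in.
  -
    intros [c S].
    exists {e : C & {f : Hom e c & {y : dob P e | proj1_sig (S : Icar J c) e f y}}},
      (fun i => existT (dob (IDoc J)) (projT1 i) (eta J (projT1 i) (proj1_sig (projT2 (projT2 i))))),
      (fun i => exist _ (projT1 (projT2 i)) (eta_below _ _ _ _ _ (proj2_sig (projT2 (projT2 i))))).
    split.
    + unfold covers. apply KLI_intro. cbn [projT1 projT2]. intros d f y Hy.
      apply (clo_incl J). exists (existT (dob (IDoc J)) d (eta J d y)).
      eexists (exist _ f (eta_below _ _ _ _ _ Hy)), (idm d). split; [|split].
      * exists (existT _ d (existT _ f (exist _ y Hy))), (idm _). symmetry; apply cmp_idr.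
      * simpl. symmetry; apply cmp_idr.
      * apply eta_in.
    + intros [e [f [y Hy]]]. exists (existT (dob P) e y). constructor. exact (idm _).
  -
    intros [c1 x1] [c2 x2] [d S] g1 g2.
    set (T1 := fun e (h : Hom e d) y => proj1_sig (S : Icar J d) e h y /\ dle P y (dmap P (cmp (proj1_sig g1) h) x1)).
    set (T12 := fun e (h : Hom e d) y => T1 e h y /\ dle P y (dmap P (cmp (proj1_sig g2) h) x2)).
    assert (dS : down (proj1_sig (S : Icar J d))) by apply (ideal_down J), (proj2_sig S).
    assert (dT1 : down T1).
    { intros e h y [H1 H2] e' g y' Hy'. split; [exact (dS _ _ _ H1 _ _ _ Hy')|].
      rewrite cmp_assoc, dmap_cmp. eapply dle_tr; [exact Hy'|]. apply dmap_mono, H2. }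
    exists {e : C & {h : Hom e d & {y : dob P e | T12 e h y}}},
      (fun i => existT (dob (IDoc J)) (projT1 i) (eta J (projT1 i) (proj1_sig (projT2 (projT2 i))))),
      (fun i => exist _ (projT1 (projT2 i)) (eta_below _ _ _ _ _ (proj1 (proj1 (proj2_sig (projT2 (projT2 i))))))).
    split.
    + unfold covers. apply KLI_intro. cbn [projT1 projT2]. intros e h y Hy.
      assert (H1 := refine_eta J HJ _ (proj1_sig g1) x1 dS
                      (fun e0 h0 y0 H0 => proj2_sig g1 _ _ _ H0) _ _ _ Hy).
      refine (clo_least J _ _ (clo_ideal J _) _ _ _ _ H1).
      intros e0 h0 y0 H0.
      assert (H2 := refine_eta J HJ _ (proj1_sig g2) x2 dT1
                      (fun e1 h1 y1 H3 => proj2_sig g2 _ _ _ (proj1 H3)) _ _ _ H0).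
      refine (clo_least J _ _ (clo_ideal J _) _ _ _ _ H2).
      intros e1 h1 y1 H3. apply (clo_incl J).
      exists (existT (dob (IDoc J)) e1 (eta J e1 y1)).
      eexists (exist _ h1 (eta_below _ _ _ _ _ (proj1 (proj1 H3)))), (idm e1). split; [|split].
      * exists (existT _ e1 (existT _ h1 (exist _ y1 H3))), (idm _). symmetry; apply cmp_idr.
      * simpl. symmetry; apply cmp_idr.
      * apply eta_in.
    + intros [e [h [y [[Hy1 Hy2] Hy3]]]].
      exists (existT (dob P) e y),
        (exist _ (cmp (proj1_sig g1) h) Hy2), (exist _ (cmp (proj1_sig g2) h) Hy3), (idm _).
      split; apply gh_eq; simpl; apply cmp_idr.
  -
    intros [c1 x1] [c2 x2] f1 f2 [d S] g Eg.
    set (T1 := fun e (h : Hom e d) y => proj1_sig (S : Icar J d) e h y /\ dle P y (dmap P (cmp (proj1_sig g) h) x1)).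
    assert (dS : down (proj1_sig (S : Icar J d))) by apply (ideal_down J), (proj2_sig S).
    exists {e : C & {h : Hom e d & {y : dob P e | T1 e h y}}},
      (fun i => existT (dob (IDoc J)) (projT1 i) (eta J (projT1 i) (proj1_sig (projT2 (projT2 i))))),
      (fun i => exist _ (projT1 (projT2 i)) (eta_below _ _ _ _ _ (proj1 (proj2_sig (projT2 (projT2 i)))))).
    split.
    + unfold covers. apply KLI_intro. cbn [projT1 projT2]. intros e h y Hy.
      assert (H1 := refine_eta J HJ _ (proj1_sig g) x1 dS
                      (fun e0 h0 y0 H0 => proj2_sig g _ _ _ H0) _ _ _ Hy).
      refine (clo_least J _ _ (clo_ideal J _) _ _ _ _ H1).
      intros e0 h0 y0 H0. apply (clo_incl J).
      exists (existT (dob (IDoc J)) e0 (eta J e0 y0)).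
      eexists (exist _ h0 (eta_below _ _ _ _ _ (proj1 H0))), (idm e0). split; [|split].
      * exists (existT _ e0 (existT _ h0 (exist _ y0 H0))), (idm _). symmetry; apply cmp_idr.
      * simpl. symmetry; apply cmp_idr.
      * apply eta_in.
    + intros [e [h [y [Hy1 Hy2]]]].
      exists (existT (dob P) e y), (exist _ (cmp (proj1_sig g) h) Hy2), (idm _).
      apply (f_equal (@proj1_sig _ _)) in Eg. simpl in Eg.
      split; apply gh_eq; simpl.
      * rewrite !cmp_assoc, Eg. reflexivity.
      * apply cmp_idr.
Qed.

Definition coverS_I (c : C) (S : Icar J c) := {e : C & {f : Hom e c & {y : dob P e | proj1_sig S e f y}}}.
Definition coverS_dom (c : C) (S : Icar J c) (i : coverS_I c S) : Groth (IDoc J) :=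
  existT (dob (IDoc J)) (projT1 i) (eta J (projT1 i) (proj1_sig (projT2 (projT2 i)))).
Definition coverS_arr (c : C) (S : Icar J c) (i : coverS_I c S) :
  @Hom (Groth (IDoc J)) (coverS_dom c S i) (existT (dob (IDoc J)) c S) :=
  exist _ (projT1 (projT2 i)) (eta_below _ _ _ _ _ (proj2_sig (projT2 (projT2 i)))).

Lemma coverS (GI : OpenFrameDoc (IDoc J)) c (S : Icar J c) :
  KL GI (existT (dob (IDoc J)) c S) (gen (coverS_dom c S) (coverS_arr c S)).
Proof.
  apply KLI_intro. cbn [projT1 projT2]. intros d f y Hy.
  apply (clo_incl J). exists (existT (dob (IDoc J)) d (eta J d y)).
  eexists (exist _ f (eta_below _ _ _ _ _ Hy)), (idm d). split; [|split].
  * exists (existT _ d (existT _ f (exist _ y Hy))), (idm _). symmetry; apply cmp_idr.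
  * simpl. symmetry; apply cmp_idr.
  * apply eta_in.
Qed.

Lemma eta_1cell (GI : OpenFrameDoc (IDoc J)) : is_1cell J (KL GI) (idF C) (eta J).
Proof. split; [apply flat_id|]. exists eta_nat_mono. apply eta_site. Qed.

End EtaSec.


Lemma sm_ext {A E : Cat} (J1 : CoverT A) (J3 : CoverT E) (o : A -> E)
  (m1 m2 : forall a b, Hom a b -> Hom (o a) (o b)) :
  (forall a b f, m1 a b f = m2 a b f) ->
  is_site_morphism J1 J3 (Build_PreFunctor A E o m1) ->
  is_site_morphism J1 J3 (Build_PreFunctor A E o m2).
Proof.
  intros H. assert (m1 = m2) as ->; auto.
  apply functional_extensionality_dep; intro a. apply functional_extensionality_dep; intro b.
  apply functional_extensionality; intro f. apply H.
Qed.

Lemma KL_props {D : Cat} {L : Doctrine D} (G : OpenFrameDoc L) : geometric G -> cov_props (KL G).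
Proof.
  intro Hg. split; [|split].
  - intros X R R' H HR. exact (KL_mono G X R R' H HR).
  - intros X Y R k HR H. exact (KL_stab G Hg X Y R k HR H).
  - intros X R R' H HR. exact (KL_trans G X R R' H HR).
Qed.

Lemma KL_all {D : Cat} {L : Doctrine D} (G : OpenFrameDoc L) (X : Groth L) :
  KL G X (fun _ _ => True).
Proof.
  apply KL_intro. intros Y HY. specialize (HY X (Gid L X) I). simpl in HY.
  rewrite ex_id in HY. exact HY.
Qed.

Lemma gpf_pres {C D : Cat} {P : Doctrine C} {Q : Doctrine D} {F : Functor C D}
  {a : forall c, dob P c -> dob Q (F c)} (H : nat_mono P Q F a) :
  forall x y z (f : @Hom (Groth P) y z) (g : @Hom (Groth P) x y),
    pmap (groth_pf H) (cmp f g) = cmp (pmap (groth_pf H) f) (pmap (groth_pf H) g).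
Proof. intros. apply gh_eq. simpl. apply fmap_cmp. Qed.


Section Univ.
Context {C : Cat} {P : Doctrine C} (J : CoverT (Groth P)) (HJ : is_topology J)
  (GI : OpenFrameDoc (IDoc J)) {D : Cat} {L : Doctrine D} (GL : OpenFrameDoc L)
  (Hgeo : geometric GL).

Lemma precomp (F : Functor C D) (b : forall c, dob (IDoc J) c -> dob L (F c)) :
  is_1cell (KL GI) (KL GL) F b -> is_1cell J (KL GL) F (fun c x => b c (eta J c x)).
Proof.
  intros [Hflat [Hb Hsite]]. split; [exact Hflat|].
  assert (Hn : nat_mono P L F (fun c x => b c (eta J c x))).
  { destruct Hb as [Hm Hnat]. split.
    - intros c x y H. apply Hm, eta_mono, H.
    - intros c d f x. rewrite eta_nat by exact HJ. apply Hnat. }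
  exists Hn.
  assert (Hc := comp_site J (KL GI) (KL GL) _ _ (KL_props GL Hgeo) (gpf_pres Hb)
                  (eta_site J HJ GI) Hsite).
  unfold compPF in Hc. eapply sm_ext; [|exact Hc].
  intros u v f. apply gh_eq. reflexivity.
Qed.

End Univ.


Section Ext.
Context {C : Cat} {P : Doctrine C} (J : CoverT (Groth P)) (HJ : is_topology J)
  (GI : OpenFrameDoc (IDoc J)) {D : Cat} {L : Doctrine D} (GL : OpenFrameDoc L)
  (Hgeo : geometric GL) (F : Functor C D) (a : forall c, dob P c -> dob L (F c))
  (Ha : is_1cell J (KL GL) F a).

Definition bext c (S : dob (IDoc J) c) : dob L (F c) :=
  of_join GL (F c) (fun Z => exists e (f : Hom e c) y,
     proj1_sig (S : Icar J c) e f y /\ Z = of_ex GL (fmap F f) (a e y)).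

Definition Qext c (Z : dob L (F c)) : IdPred P c :=
  fun e f y => dle L (of_ex GL (fmap F f) (a e y)) Z.

Lemma a_mono c (x y : dob P c) : dle P x y -> dle L (a c x) (a c y).
Proof. destruct Ha as [_ [[Hm _] _]]. apply Hm. Qed.

Lemma a_nat c d (f : Hom d c) x : a d (dmap P f x) = dmap L (fmap F f) (a c x).
Proof. destruct Ha as [_ [[_ Hn] _]]. apply Hn. Qed.

Lemma a_arrow (u v : Groth P) (m : @Hom (Groth P) u v) :
  dle L (of_ex GL (fmap F (proj1_sig m)) (a _ (projT2 u))) (a _ (projT2 v)).
Proof. apply (ex_le GL). rewrite <- a_nat. apply a_mono. exact (proj2_sig m). Qed.

Lemma Qext_ideal c Z : is_ideal J (Qext c Z).
Proof.
  split.
  - intros d f x H e g y Hy. unfold Qext in *. rewrite fmap_cmp, ex_cmp.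
    eapply fle_tr; [|exact H]. apply (ex_mono GL). apply (ex_le GL). rewrite <- a_nat. apply a_mono, Hy.
  - intros d f x [I [dom [h [Hc Hi]]]]. unfold Qext. apply (ex_le GL).
    destruct Ha as [_ [Hn [Hi1 _]]].
    assert (HK := Hi1 _ _ Hc). unfold covers in HK.
    apply (KL_le GL _ _ HK).
    intros b g [[b0 [w [i [m Hw]]]] [k Hk]]. subst g. simpl in Hw. subst w.
    apply (ex_le GL). rewrite <- dmap_cmp. apply (ex_le_inv GL). simpl.
    rewrite !fmap_cmp, !ex_cmp.
    eapply fle_tr; [|exact (Hi i)]. unfold Qext. rewrite fmap_cmp, ex_cmp.
    apply (ex_mono GL), (ex_mono GL). eapply fle_tr; [apply (ex_mono GL), (arrow_ex GL _ _ k)|].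
    apply (a_arrow _ _ m).
Qed.

Lemma bext_le c (S : dob (IDoc J) c) Z :
  dle L (bext c S) Z <-> (forall e f y, proj1_sig (S : Icar J c) e f y -> Qext c Z e f y).
Proof.
  split.
  - intros H e f y Hy. eapply fle_tr; [|exact H]. apply (join_ub GL). exists e, f, y; auto.
  - intros H. apply (join_lub GL). intros x [e [f [y [Hy ->]]]]. apply H, Hy.
Qed.

Lemma bext_ub c (S : dob (IDoc J) c) e f y :
  proj1_sig (S : Icar J c) e f y -> dle L (of_ex GL (fmap F f) (a e y)) (bext c S).
Proof. intro H. apply (join_ub GL). exists e, f, y; auto. Qed.

Lemma bext_eta c x : bext c (eta J c x) = a c x.
Proof.
  apply (fantisym GL).
  - apply bext_le. intros e f y Hy.
    refine (clo_least J _ _ (Qext_ideal c (a c x)) _ _ _ _ Hy).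
    intros e0 g z Hz. unfold Qext. apply (ex_le GL). rewrite <- a_nat. apply a_mono, Hz.
  - generalize (bext_ub c (eta J c x) c (idm c) x (eta_in J c x)).
    rewrite fmap_id, ex_id. auto.
Qed.

Lemma bext_mono c (S T : dob (IDoc J) c) : dle (IDoc J) S T -> dle L (bext c S) (bext c T).
Proof.
  intros H. apply bext_le. intros e f y Hy. apply bext_ub. apply H, Hy.
Qed.

Lemma bext_nat c d (h : Hom d c) (S : dob (IDoc J) c) :
  bext d (dmap (IDoc J) h S) = dmap L (fmap F h) (bext c S).
Proof.
  apply (fantisym GL).
  - apply bext_le. intros e g y Hy. unfold Qext. apply (ex_le GL). rewrite <- dmap_cmp.
    apply (ex_le_inv GL). rewrite <- fmap_cmp. apply bext_ub. exact Hy.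
  - unfold bext at 1. rewrite (of_map_join _ GL). apply (join_lub GL).
    intros z [z0 [[e [f [y [Hy ->]]]] ->]].
    destruct Ha as [Hflat _].
    set (X := existT (dob L) (F c) (of_ex GL (fmap F f) (a e y))).
    set (iota := exist (fun g0 => dle L (a e y) (dmap L g0 (of_ex GL (fmap F f) (a e y)))) (fmap F f)
                   (ex_unit GL _ _ _ _) : @Hom (Groth L) (existT (dob L) (F e) (a e y)) X).
    set (R := @gen (Groth L) X unit (fun _ => existT (dob L) (F e) (a e y) : Groth L) (fun _ => iota)).
    assert (HKR : KL GL X R).
    { apply KL_intro. intros Y HY. specialize (HY _ iota (ex_intro _ tt (ex_intro _ (idm _) (eq_sym (cmp_idr _ _ _ _))))).
      exact HY. }
    assert (HG := Hgeo (F c) (F d) (fmap F h) _ R (gen_sieve _ _) HKR).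
    apply (KL_le GL _ _ HG).
    intros [b' U] g [[] [k Hk]].
    apply (f_equal (@proj1_sig _ _)) in Hk. simpl in Hk. cbn [projT1 projT2].
    destruct Hflat as [_ [_ [fiii fiv]]].
    destruct (fiii d e b' (proj1_sig g) (proj1_sig k)) as [I1 [dom1 [h1 [Hc1 Hd1]]]].
    destruct (Hc1 b' (idm b')) as [i1 [m1 Hm1]].
    destruct (Hd1 i1) as [c' [f1 [f2 [k1 [E1 E2]]]]]. cbn [pobj pmap toPF] in *.
    set (k2 := cmp k1 m1).
    assert (E1' : cmp (fmap F f1) k2 = proj1_sig g).
    { unfold k2. rewrite cmp_assoc, E1, <- cmp_assoc, <- Hm1. apply cmp_idr. }
    assert (E2' : cmp (fmap F f2) k2 = proj1_sig k).
    { unfold k2. rewrite cmp_assoc, E2, <- cmp_assoc, <- Hm1. apply cmp_idr. }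
    assert (Eq : cmp (fmap F (cmp h f1)) k2 = cmp (fmap F (cmp f f2)) k2).
    { rewrite !fmap_cmp, <- !cmp_assoc, E1', E2'. exact Hk. }
    destruct (fiv c' c (cmp h f1) (cmp f f2) b' k2 Eq) as [I2 [dom2 [h2 [Hc2 Hd2]]]].
    destruct (Hc2 b' (idm b')) as [i2 [m2 Hm2]].
    destruct (Hd2 i2) as [c'' [e' [k3 [E3 E4]]]]. cbn [pobj pmap toPF] in *.
    set (k4 := cmp k3 m2).
    assert (E4' : cmp (fmap F e') k4 = k2).
    { unfold k4. rewrite cmp_assoc, E4, <- cmp_assoc, <- Hm2. apply cmp_idr. }
    set (u := cmp f1 e'). set (v := cmp f2 e').
    assert (Hyv : proj1_sig (dmap (IDoc J) h S : Icar J d) c'' u (dmap P v y)).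
    { simpl. unfold u. rewrite cmp_assoc, E3, <- cmp_assoc.
      apply (ideal_down J _ (proj2_sig (S : Icar J c)) _ _ _ Hy). apply dle_refl. }
    eapply fle_tr; [|apply (bext_ub _ _ _ _ _ Hyv)].
    assert (Eg : proj1_sig g = cmp (fmap F u) k4).
    { unfold u. rewrite fmap_cmp, <- cmp_assoc, E4'. symmetry; exact E1'. }
    eapply (fle_tr _ _ (of_ex GL (cmp (fmap F u) k4) U) _). { rewrite <- Eg. apply fle_refl. }
    rewrite (ex_cmp GL). apply (ex_mono GL). apply (ex_le GL). rewrite a_nat, <- dmap_cmp.
    unfold v. rewrite fmap_cmp, <- cmp_assoc, E4', E2'. exact (proj2_sig k).
Qed.

Lemma bext_nat_mono : nat_mono (IDoc J) L F bext.
Proof. split. apply bext_mono. intros c d f x. apply bext_nat. Qed.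

Definition retarget (X : Groth L) c x (k : @Hom (Groth L) X (existT (dob L) (F c) (a c x))) :
  @Hom (Groth L) X (existT (dob L) (F c) (bext c (eta J c x))) :=
  exist _ (proj1_sig k)
    (eq_ind_r (fun t => dle L (projT2 X) (dmap L (proj1_sig k) t)) (proj2_sig k) (bext_eta c x)).

Definition bdom c (S : Icar J c) (i : coverS_I J c S) : Groth L :=
  existT (dob L) (F (projT1 i)) (a _ (proj1_sig (projT2 (projT2 i)))).
Definition barr c (S : Icar J c) (i : coverS_I J c S) :
  @Hom (Groth L) (bdom c S i) (existT (dob L) (F c) (bext c S)) :=
  exist _ (fmap F (projT1 (projT2 i)))
    (ex_le_inv GL _ _ _ _ _ (bext_ub c S _ _ _ (proj2_sig (projT2 (projT2 i))))).

Lemma bcover c (S : Icar J c) :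
  KL GL (existT (dob L) (F c) (bext c S)) (gen (bdom c S) (barr c S)).
Proof.
  apply KL_intro. intros Y HY. cbn [projT1 projT2]. apply bext_le. intros e f y Hy.
  exact (HY _ (barr c S (existT _ e (existT _ f (exist _ y Hy))))
           (ex_intro _ (existT _ e (existT _ f (exist _ y Hy))) (ex_intro _ (idm _) (eq_sym (cmp_idr _ _ _ _))))).
Qed.

Lemma bext_site : is_site_morphism (KL GI) (KL GL) (groth_pf bext_nat_mono).
Proof.
  assert (Hprops := KL_props GL Hgeo).
  destruct Hprops as [KM [KS KT]].
  destruct Ha as [Hflat [Hn [ai [aii [aiii aiv]]]]].
  split; [|split; [|split]].
  -
    intros [c V] R HR. unfold covers. apply KL_intro. intros Y HY. cbn [projT1 projT2].
    apply bext_le. intros e f y Hy.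
    refine (KLI_le J GI _ R HR (Qext c Y) (Qext_ideal c Y) _ e f y Hy).
    intros e0 m w [b [g [k [Hg [-> Hk]]]]].
    unfold Qext. rewrite fmap_cmp, (ex_cmp GL).
    eapply fle_tr; [apply (ex_mono GL), (bext_ub _ _ _ _ _ Hk)|].
    exact (HY _ (pmap (groth_pf bext_nat_mono) g)
             (ex_intro _ (existT _ b (exist _ g Hg)) (ex_intro _ (idm _) (eq_sym (cmp_idr _ _ _ _))))).
  -
    intros d0. destruct (aii d0) as [I [dom [h [Hc Hd]]]]. exists I, dom, h. split; [exact Hc|].
    intro i. destruct (Hd i) as [[c x] [k]].
    exists (existT (dob (IDoc J)) c (eta J c x)). constructor. exact (retarget _ c x k).
  -
    intros [c1 S1] [c2 S2] [d W] g1 g2.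
    set (Good := fun z (g : @Hom (Groth L) z (existT (dob L) d W)) =>
      exists (c : Groth (IDoc J)) (f1 : @Hom (Groth (IDoc J)) c (existT _ c1 S1))
        (f2 : @Hom (Groth (IDoc J)) c (existT _ c2 S2))
        (k : @Hom (Groth L) z (pobj (groth_pf bext_nat_mono) c)),
        cmp (pmap (groth_pf bext_nat_mono) f1) k = cmp g1 g /\
        cmp (pmap (groth_pf bext_nat_mono) f2) k = cmp g2 g).
    apply (cover_good (KL GL) (conj KM (conj KS KT)) _ Good Good); [|auto].
    assert (H1 := KS _ _ _ g1 (gen_sieve _ _) (bcover c1 S1)).
    apply (KT _ _ _ H1). intros b f' [i1 [k1 Ek1]].
    assert (H2 := KS _ _ _ (cmp g2 f') (gen_sieve _ _) (bcover c2 S2)).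
    apply (KT _ _ _ H2). intros b' f'' [i2 [k2 Ek2]].
    destruct i1 as [e1 [h1 [y1 Hy1]]], i2 as [e2 [h2 [y2 Hy2]]].
    destruct (aiii (existT (dob P) e1 y1) (existT (dob P) e2 y2) b' (cmp k1 f'') k2)
      as [I [dom [h [Hc Hd]]]].
    apply (KM _ _ _ Hc). intros z g [i [m ->]].
    destruct (Hd i) as [[c z0] [u1 [u2 [k [Eu1 Eu2]]]]].
    apply (f_equal (@proj1_sig _ _)) in Ek1, Ek2, Eu1, Eu2. simpl in Ek1, Ek2, Eu1, Eu2.
    unfold pullS, Good.
    assert (HS1 : proj1_sig (S1 : Icar J c1) c (cmp h1 (proj1_sig u1)) z0).
    { exact (ideal_down J _ (proj2_sig (S1 : Icar J c1)) _ _ _ Hy1 _ _ _ (proj2_sig u1)). }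
    assert (HS2 : proj1_sig (S2 : Icar J c2) c (cmp h2 (proj1_sig u2)) z0).
    { exact (ideal_down J _ (proj2_sig (S2 : Icar J c2)) _ _ _ Hy2 _ _ _ (proj2_sig u2)). }
    exists (existT (dob (IDoc J)) c (eta J c z0)),
      (exist _ (cmp h1 (proj1_sig u1)) (eta_below J _ _ _ _ _ HS1)),
      (exist _ (cmp h2 (proj1_sig u2)) (eta_below J _ _ _ _ _ HS2)),
      (retarget _ c z0 (cmp k m)).
    split; apply gh_eq; simpl.
    + rewrite fmap_cmp, !cmp_assoc, <- (cmp_assoc _ _ _ _ _ (fmap F h1)), Eu1.
      rewrite !cmp_assoc, Ek1. reflexivity.
    + rewrite fmap_cmp, !cmp_assoc, <- (cmp_assoc _ _ _ _ _ (fmap F h2)), Eu2.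
      rewrite <- !cmp_assoc. rewrite !cmp_assoc, Ek2. rewrite <- !cmp_assoc. reflexivity.
  -
    intros [c1 S1] [c2 S2] f1 f2 [d W] g Eg.
    set (Good := fun z (g' : @Hom (Groth L) z (existT (dob L) d W)) =>
      exists (c : Groth (IDoc J)) (e : @Hom (Groth (IDoc J)) c (existT _ c1 S1))
        (k : @Hom (Groth L) z (pobj (groth_pf bext_nat_mono) c)),
        cmp f1 e = cmp f2 e /\ cmp (pmap (groth_pf bext_nat_mono) e) k = cmp g g').
    apply (cover_good (KL GL) (conj KM (conj KS KT)) _ Good Good); [|auto].
    assert (H1 := KS _ _ _ g (gen_sieve _ _) (bcover c1 S1)).
    apply (KT _ _ _ H1). intros b f' [[e [h [y Hy]]] [k1 Ek1]].
    apply (f_equal (@proj1_sig _ _)) in Ek1, Eg. simpl in Ek1, Eg. cbn [bdom projT1 projT2] in *.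
    destruct Hflat as [_ [_ [_ fiv]]].
    assert (Eq : cmp (fmap F (cmp (proj1_sig f1) h)) (proj1_sig k1) =
                 cmp (fmap F (cmp (proj1_sig f2) h)) (proj1_sig k1)).
    { rewrite !fmap_cmp, <- !cmp_assoc.
      transitivity (cmp (fmap F (proj1_sig f1)) (cmp (proj1_sig g) (proj1_sig f'))).
      { f_equal. symmetry. exact Ek1. }
      transitivity (cmp (fmap F (proj1_sig f2)) (cmp (proj1_sig g) (proj1_sig f'))).
      { rewrite !cmp_assoc. f_equal. exact Eg. }
      f_equal. exact Ek1. }
    destruct (fiv _ _ _ _ _ _ Eq) as [I2 [dom2 [h2 [Hc2 Hd2]]]].
    destruct (Hc2 _ (idm _)) as [i2 [mm Hmm]].
    destruct (Hd2 i2) as [c' [e' [kk [E3 E4]]]]. cbn [pobj pmap toPF] in *.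
    assert (E4' : cmp (fmap F e') (cmp kk mm) = proj1_sig k1).
    { rewrite cmp_assoc, E4, <- cmp_assoc, <- Hmm. apply cmp_idr. }
    apply (KM _ _ _ (KL_all GL b)). intros z g0 _. unfold pullS, Good.
    assert (HS1 : proj1_sig (S1 : Icar J c1) c' (cmp h e') (dmap P e' y)).
    { exact (ideal_down J _ (proj2_sig (S1 : Icar J c1)) _ _ _ Hy _ _ _ (dle_refl _ _ _ _)). }
    assert (Hk : dle L (projT2 z) (dmap L (cmp (cmp kk mm) (proj1_sig g0)) (a c' (dmap P e' y)))).
    { rewrite a_nat, <- dmap_cmp, cmp_assoc, E4'. rewrite dmap_cmp.
      eapply fle_tr; [exact (proj2_sig g0)|]. apply dmap_mono. exact (proj2_sig k1). }
    exists (existT (dob (IDoc J)) c' (eta J c' (dmap P e' y))),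
      (exist _ (cmp h e') (eta_below J _ _ _ _ _ HS1)),
      (retarget _ c' (dmap P e' y) (exist _ (cmp (cmp kk mm) (proj1_sig g0)) Hk)).
    split; apply gh_eq; simpl.
    + rewrite !cmp_assoc. exact E3.
    + rewrite fmap_cmp.
      transitivity (cmp (fmap F h) (cmp (proj1_sig k1) (proj1_sig g0))).
      { rewrite <- cmp_assoc. f_equal. rewrite cmp_assoc. f_equal. exact E4'. }
      rewrite cmp_assoc. transitivity (cmp (cmp (proj1_sig g) (proj1_sig f')) (proj1_sig g0)).
      { f_equal. symmetry. exact Ek1. }
      symmetry. apply cmp_assoc.
Qed.

Lemma bext_1cell : is_1cell (KL GI) (KL GL) F bext.
Proof.
  split; [exact (proj1 Ha)|]. exists bext_nat_mono. exact bext_site.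
Qed.

Lemma bext_unique (b' : forall c, dob (IDoc J) c -> dob L (F c)) :
  is_1cell (KL GI) (KL GL) F b' -> (forall c x, b' c (eta J c x) = a c x) ->
  forall c S, b' c S = bext c S.
Proof.
  intros [_ [Hb' Hs']] Heq c S.
  assert (Hm' := proj1 Hb'). assert (Hn' := proj2 Hb').
  apply (fantisym GL).
  - assert (Hc := proj1 Hs' _ _ (coverS J GI c S)). unfold covers in Hc.
    apply (KL_le GL _ _ Hc). intros b g [[bb [g1 [i [m Hg1]]]] [k ->]]. simpl in Hg1. subst g1.
    destruct i as [e [f [y Hy]]]. simpl.
    rewrite (ex_cmp GL). eapply fle_tr; [apply (ex_mono GL), (arrow_ex GL _ _ k)|].
    simpl. rewrite fmap_cmp, (ex_cmp GL).
    eapply fle_tr; [|apply (bext_ub _ _ _ _ _ Hy)]. apply (ex_mono GL), (ex_le GL).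
    rewrite <- Heq, <- Hn'. apply Hm'. exact (proj2_sig m).
  - apply bext_le. intros e f y Hy. unfold Qext. apply (ex_le GL). rewrite <- Heq, <- Hn'.
    apply Hm'. apply eta_below. exact Hy.
Qed.

End Ext.


Lemma twocell {C : Cat} {P : Doctrine C} (J : CoverT (Groth P)) (HJ : is_topology J)
  (GI : OpenFrameDoc (IDoc J)) {D : Cat} {L : Doctrine D} (GL : OpenFrameDoc L)
  (Hgeo : geometric GL) (F F' : Functor C D)
  (b : forall c, dob (IDoc J) c -> dob L (F c)) (b' : forall c, dob (IDoc J) c -> dob L (F' c)) :
  is_1cell (KL GI) (KL GL) F b -> is_1cell (KL GI) (KL GL) F' b' ->
  forall alpha : NatTrans F F',
    is_2cell b b' alpha <->
    is_2cell (fun c x => b c (eta J c x)) (fun c x => b' c (eta J c x)) alpha.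
Proof.
  intros Hb Hb' alpha. split.
  - intros H c x. apply H.
  - intros H c S.
    rewrite (bext_unique J GI GL F (fun c x => b c (eta J c x)) b Hb (fun _ _ => eq_refl) c S).
    apply bext_le. intros e f y Hy. unfold Qext. apply (ex_le GL).
    destruct Hb' as [_ [[Hm' Hn'] _]].
    rewrite <- dmap_cmp, (nt_nat _ _ _ _ alpha), dmap_cmp, <- Hn'.
    eapply fle_tr; [apply H|]. apply dmap_mono, Hm'. apply eta_below. exact Hy.
Qed.

Lemma postcomp_eta {C : Cat} {P : Doctrine C} (J : CoverT (Groth P)) {D : Cat} {Q : Doctrine D}
  (K : CoverT (Groth Q)) (HK : is_topology K) (GQ : GeomStr (IDoc K)) (F : Functor C D)
  (a : forall c, dob P c -> dob Q (F c)) :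
  is_1cell J K F a -> is_1cell J (KL GQ) F (fun c x => eta K (F c) (a c x)).
Proof.
  intros [Hflat [Ha Hs]]. split; [exact Hflat|].
  assert (Hn : nat_mono P (IDoc K) F (fun c x => eta K (F c) (a c x))).
  { destruct Ha as [Hm Hnat]. split.
    - intros c x y H. apply eta_mono, Hm, H.
    - intros c d f x. rewrite Hnat. apply (eta_nat K HK). }
  exists Hn.
  assert (Hc := comp_site J K (KL (gs_frame _ GQ)) _ _ (KL_props (gs_frame _ GQ) (gs_geom _ GQ))
                  (gpf_pres (eta_nat_mono K HK)) Hs (eta_site K HK (gs_frame _ GQ))).
  unfold compPF in Hc. eapply sm_ext; [|exact Hc].
  intros u v f. apply gh_eq. reflexivity.
Qed.

Theorem proposition4p13 (C : Cat) (P : Doctrine C) (J : CoverT (Groth P))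
  (HJ : is_topology J) :
  (* I(P,J) is a geometric doctrine *)
  inhabited (GeomStr (IDoc J)) /\
  forall GI : GeomStr (IDoc J),
  (* the unit (id_C, eta) is a 1-cell (P,J) -> (I(P,J), K_I(P,J)) *)
  is_1cell J (KL GI) (idF C) (eta J) /\
  (* Hom_DocSites((P,J),(L,K_L)) ≅ Hom_GeomDoc((I(P,J),K),(L,K_L)) by precomposition *)
  (forall (D : Cat) (L : Doctrine D) (GL : GeomStr L),
     (forall (F : Functor C D) (b : forall c, dob (IDoc J) c -> dob L (F c)),
        is_1cell (KL GI) (KL GL) F b ->
        is_1cell J (KL GL) F (fun c x => b c (eta J c x))) /\
     (forall (F : Functor C D) (a : forall c, dob P c -> dob L (F c)),
        is_1cell J (KL GL) F a ->
        exists b : forall c, dob (IDoc J) c -> dob L (F c),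
          (is_1cell (KL GI) (KL GL) F b /\ forall c x, b c (eta J c x) = a c x) /\
          forall b' : forall c, dob (IDoc J) c -> dob L (F c),
            is_1cell (KL GI) (KL GL) F b' ->
            (forall c x, b' c (eta J c x) = a c x) ->
            forall c S, b' c S = b c S) /\
     (forall (F F' : Functor C D)
             (b : forall c, dob (IDoc J) c -> dob L (F c))
             (b' : forall c, dob (IDoc J) c -> dob L (F' c)),
        is_1cell (KL GI) (KL GL) F b -> is_1cell (KL GI) (KL GL) F' b' ->
        forall alpha : NatTrans F F',
          is_2cell b b' alpha <->
          is_2cell (fun c x => b c (eta J c x)) (fun c x => b' c (eta J c x)) alpha)) /\
  (* the 2-functor I on 1-cells and 2-cells *)
  (forall (D : Cat) (Q : Doctrine D) (K : CoverT (Groth Q)),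
     is_topology K ->
     forall GQ : GeomStr (IDoc K),
     (forall (F : Functor C D) (a : forall c, dob P c -> dob Q (F c)),
        is_1cell J K F a ->
        exists fa : forall c, dob (IDoc J) c -> dob (IDoc K) (F c),
          (is_1cell (KL GI) (KL GQ) F fa /\
           forall c x, fa c (eta J c x) = eta K (F c) (a c x)) /\
          forall fa' : forall c, dob (IDoc J) c -> dob (IDoc K) (F c),
            is_1cell (KL GI) (KL GQ) F fa' ->
            (forall c x, fa' c (eta J c x) = eta K (F c) (a c x)) ->
            forall c S, fa' c S = fa c S) /\
     (forall (F F' : Functor C D)
             (a : forall c, dob P c -> dob Q (F c))
             (a' : forall c, dob P c -> dob Q (F' c))
             (fa : forall c, dob (IDoc J) c -> dob (IDoc K) (F c))
             (fa' : forall c, dob (IDoc J) c -> dob (IDoc K) (F' c))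
             (alpha : NatTrans F F'),
        is_1cell J K F a -> is_1cell J K F' a' ->
        is_1cell (KL GI) (KL GQ) F fa -> is_1cell (KL GI) (KL GQ) F' fa' ->
        (forall c x, fa c (eta J c x) = eta K (F c) (a c x)) ->
        (forall c x, fa' c (eta J c x) = eta K (F' c) (a' c x)) ->
        is_2cell a a' alpha -> is_2cell fa fa' alpha)).
Proof.
  split; [constructor; exact (IGeom J HJ)|].
  intro GI. split; [exact (eta_1cell J HJ GI)|]. split.
  - intros D L GL. split; [|split].
    + intros F b Hb. exact (precomp J HJ (gs_frame _ GI) (gs_frame _ GL) (gs_geom _ GL) F b Hb).
    + intros F a Ha. exists (bext J (gs_frame _ GL) F a). split.
      * split; [exact (bext_1cell J (gs_frame _ GI) (gs_frame _ GL) (gs_geom _ GL) F a Ha)|].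
        intros c x. exact (bext_eta J (gs_frame _ GL) F a Ha c x).
      * intros b' Hb' Heq c S. exact (bext_unique J (gs_frame _ GI) (gs_frame _ GL) F a b' Hb' Heq c S).
    + intros F F' b b' Hb Hb' alpha.
      exact (twocell J HJ (gs_frame _ GI) (gs_frame _ GL) (gs_geom _ GL) F F' b b' Hb Hb' alpha).
  - intros D Q K HK GQ. split.
    + intros F a Ha.
      assert (Hc := postcomp_eta J K HK (gs_frame _ GQ) F a Ha).
      exists (bext J (gs_frame _ GQ) F (fun c x => eta K (F c) (a c x))). split.
      * split; [exact (bext_1cell J (gs_frame _ GI) (gs_frame _ GQ) (gs_geom _ GQ) F _ Hc)|].
        intros c x. exact (bext_eta J (gs_frame _ GQ) F _ Hc c x).
      * intros fa' H1 H2 c S. exact (bext_unique J (gs_frame _ GI) (gs_frame _ GQ) F _ fa' H1 H2 c S).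
    + intros F F' a a' fa fa' alpha Ha Ha' Hfa Hfa' E E' H2.
      apply (twocell J HJ (gs_frame _ GI) (gs_frame _ GQ) (gs_geom _ GQ) F F' fa fa' Hfa Hfa' alpha). intros c x.
      cbv beta. rewrite E, E'. eapply dle_tr; [apply eta_mono, H2|].
      rewrite (eta_nat K HK). apply dle_refl.
Qed.
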